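(* In $\mathrm{F}_H$, if $\emptyset \vdash e : T$, then either $e \longrightarrow e'$ for some $e'$, or $e$ is a value, or $e = \Uparrow\ell$ for some blame label $\ell$.
   Context: Syntax of $\mathrm{F}_H$. Base types $B$ include $\mathsf{Bool}$; each $B$ has a set $\mathcal{K}_B$ of constants ($\mathcal{K}_{\mathsf{Bool}}=\{\mathsf{true},\mathsf{false}\}$). Primitive operations $\mathtt{op}$ have denotations $[\![\mathtt{op}]\!]$ (partial functions from tuples of constants to constants). Types $T ::= B \mid \alpha \mid x{:}T_1\to T_2 \mid \forall\alpha.T \mid \{x{:}T \mid e\}$; $T_1\to T_2$ abbreviates $x{:}T_1\to T_2$ with $x$ not free in $T_2$. Values $v ::= k \mid \lambda x{:}T.e \mid \Lambda\alpha.e \mid \langle T_1\Rightarrow T_2\rangle^{\ell}$. Terms $e ::= v \mid x \mid \mathtt{op}(e_1,\dots,e_n) \mid e_1\,e_2 \mid e\,T \mid \langle\!\langle \{x{:}T_1\mid e_1\}, e_2\rangle\!\rangle^{\ell} \mid \langle \{x{:}T_1\mid e_1\}, e_2, v\rangle^{\ell} \mid \Uparrow\ell$. Substitution is capture-avoiding; $\mathsf{let}\ y{:}T=e_1\ \mathsf{in}\ e_2$ means $(\lambda y{:}T.e_2)\,e_1$. Semantics. Reduction $\rightsquigarrow$: $\mathtt{op}(k_1,\dots,k_n)\rightsquigarrow[\![\mathtt{op}]\!](k_1,\dots,k_n)$; $(\lambda x{:}T.e)\,v\rightsquigarrow e[v/x]$; $(\Lambda\alpha.e)\,T\rightsquigarrow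 e[T/\alpha]$; $\langle B\Rightarrow B\rangle^\ell v\rightsquigarrow v$; $\langle x{:}T_{11}\to T_{12}\Rightarrow x{:}T_{21}\to T_{22}\rangle^\ell v\rightsquigarrow \lambda x{:}T_{21}.\,\mathsf{let}\ y{:}T_{11}=\langle T_{21}\Rightarrow T_{11}\rangle^\ell x\ \mathsf{in}\ \langle T_{12}[y/x]\Rightarrow T_{22}\rangle^\ell (v\,y)$ ($y$ fresh); $\langle\forall\alpha.T_1\Rightarrow\forall\alpha.T_2\rangle^\ell v\rightsquigarrow\Lambda\alpha.\langle T_1\Rightarrow T_2\rangle^\ell(v\,\alpha)$; $\langle\{x{:}T_1\mid e_1\}\Rightarrow T_2\rangle^\ell v\rightsquigarrow\langle T_1\Rightarrow T_2\rangle^\ell v$; $\langle T_1\Rightarrow\{x{:}T_2\mid e_2\}\rangle^\ell v\rightsquigarrow\langle\!\langle\{x{:}T_2\mid e_2\},\langle T_1\Rightarrow T_2\rangle^\ell v\rangle\!\rangle^\ell$ if $T_1$ is not a refinement type; $\langle\!\langle\{x{:}T\mid e\},v\rangle\!\rangle^\ell\rightsquigarrow\langle\{x{:}T\mid e\},e[v/x],v\rangle^\ell$; $\langle\{x{:}T\mid e\},\mathsf{true},v\rangle^\ell\rightsquigarrow v$; $\langle\{x{:}T\mid e\},\mathsf{false},v\rangle^\ell\rightsquigarrow\Uparrow\ell$. Evaluation contexts $E ::= [\,] \mid \mathtt{op}(v_1,\dots,v_n,E,e_1,\dots,e_m) \mid E\,e \mid v\,E \mid E\,T \mid \langle\!\langle\{x{:}T\mid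 e\},E\rangle\!\rangle^\ell \mid \langle\{x{:}T\mid e\},E,v\rangle^\ell$; $E[e_1]\longrightarrow E[e_2]$ if $e_1\rightsquigarrow e_2$, and $E[\Uparrow\ell]\longrightarrow\Uparrow\ell$ if $E\ne[\,]$; $\longrightarrow^*$ is its reflexive–transitive closure. Typing. Contexts $\Gamma ::= \emptyset \mid \Gamma,x{:}T \mid \Gamma,\alpha$ (distinct variables). Each constant has a type $\mathsf{ty}(k)$ and each operation a type $\mathsf{ty}(\mathtt{op})=x_1{:}T_1\to\dots\to x_n{:}T_n\to T_0$. Let $\mathit{unref}(\{x{:}T\mid e\})=\mathit{unref}(T)$ and $\mathit{unref}(T)=T$ otherwise. Assumed: for $k\in\mathcal{K}_B$, $\mathit{unref}(\mathsf{ty}(k))=B$, $\emptyset\vdash\mathsf{ty}(k)$ and $\langle B\Rightarrow\mathsf{ty}(k)\rangle^\ell k\longrightarrow^* k$; each $\mathit{unref}(T_i)$ ($0\le i\le n$) for $\mathsf{ty}(\mathtt{op})$ is a base type, and if $k_i\in\mathcal{K}_{\mathit{unref}(T_i)}$ with $\langle \mathit{unref}(T_i)\Rightarrow T_i[k_1/x_1,\dots,k_{i-1}/x_{i-1}]\rangle^\ell k_i\longrightarrow^* k_i$ for all $1\le i\le n$, then $[\![\mathtt{op}]\!](k_1,\dots,k_n)=k\in\mathcal{K}_{\mathit{unref}(T_0)}$ with $\langle\mathit{unref}(T_0)\Rightarrow T_0[k_1/x_1,\dots,k_n/x_n]\rangle^\ell k\longrightarrow^* k$, while $[\![\mathtt{op}]\!](k_1,\dots,k_n)$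 is undefined if some $k_i$ fails this condition. Well-formedness: $\vdash\emptyset$; $\vdash\Gamma,x{:}T$ if $\vdash\Gamma$, $\Gamma\vdash T$; $\vdash\Gamma,\alpha$ if $\vdash\Gamma$. $\Gamma\vdash B$ if $\vdash\Gamma$; $\Gamma\vdash\alpha$ if $\vdash\Gamma$, $\alpha\in\Gamma$; $\Gamma\vdash x{:}T_1\to T_2$ if $\Gamma\vdash T_1$ and $\Gamma,x{:}T_1\vdash T_2$; $\Gamma\vdash\forall\alpha.T$ if $\Gamma,\alpha\vdash T$; $\Gamma\vdash\{x{:}T\mid e\}$ if $\Gamma\vdash T$ and $\Gamma,x{:}T\vdash e:\mathsf{Bool}$. Compatibility $T_1\parallel T_2$: $B\parallel B$; $\alpha\parallel\alpha$; $\{x{:}T_1\mid e\}\parallel T_2$ and $T_1\parallel\{x{:}T_2\mid e\}$ if $T_1\parallel T_2$; $x{:}T_{11}\to T_{12}\parallel x{:}T_{21}\to T_{22}$ if $T_{11}\parallel T_{21}$ and $T_{12}\parallel T_{22}$; $\forall\alpha.T_1\parallel\forall\alpha.T_2$ if $T_1\parallel T_2$. Conversion: $T_1\Rrightarrow T_2$ if $T_1=T[e_1/x]$, $T_2=T[e_2/x]$ and $e_1\longrightarrow e_2$ for some $T,x,e_1,e_2$; $\equiv$ is the symmetric transitive closure of $\Rrightarrow$. Typing rules: $\Gamma\vdash x:T$ if $\vdash\Gamma$, $x{:}T\in\Gamma$; $\Gamma\vdash k:\mathsf{ty}(k)$ if $\vdash\Gamma$; $\Gamma\vdash\mathtt{op}(e_1,\dots,e_n):T_0[e_1/x_1,\dots,e_n/x_n]$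 if $\vdash\Gamma$, $\mathsf{ty}(\mathtt{op})=x_1{:}T_1\to\dots\to x_n{:}T_n\to T_0$ and $\Gamma\vdash e_i:T_i[e_1/x_1,\dots,e_{i-1}/x_{i-1}]$ for all $i$; $\Gamma\vdash\lambda x{:}T_1.e:x{:}T_1\to T_2$ if $\Gamma,x{:}T_1\vdash e:T_2$; $\Gamma\vdash\langle T_1\Rightarrow T_2\rangle^\ell:T_1\to T_2$ if $\Gamma\vdash T_1$, $\Gamma\vdash T_2$, $T_1\parallel T_2$; $\Gamma\vdash e_1\,e_2:T_2[e_2/x]$ if $\Gamma\vdash e_1:x{:}T_1\to T_2$, $\Gamma\vdash e_2:T_1$, $\Gamma\vdash T_2[e_2/x]$; $\Gamma\vdash\Lambda\alpha.e:\forall\alpha.T$ if $\Gamma,\alpha\vdash e:T$; $\Gamma\vdash e\,T_2:T_1[T_2/\alpha]$ if $\Gamma\vdash e:\forall\alpha.T_1$, $\Gamma\vdash T_2$; $\Gamma\vdash\langle\!\langle\{x{:}T_1\mid e_1\},e_2\rangle\!\rangle^\ell:\{x{:}T_1\mid e_1\}$ if $\Gamma\vdash\{x{:}T_1\mid e_1\}$, $\Gamma\vdash e_2:T_1$; $\Gamma\vdash\langle\{x{:}T_1\mid e_1\},e_2,v\rangle^\ell:\{x{:}T_1\mid e_1\}$ if $\vdash\Gamma$, $\emptyset\vdash\{x{:}T_1\mid e_1\}$, $\emptyset\vdash v:T_1$, $\emptyset\vdash e_2:\mathsf{Bool}$, $e_1[v/x]\longrightarrow^* e_2$; $\Gamma\vdash\Uparrow\ell:T$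 if $\vdash\Gamma$, $\emptyset\vdash T$; $\Gamma\vdash e:T_2$ if $\vdash\Gamma$, $\emptyset\vdash e:T_1$, $\emptyset\vdash T_2$, $T_1\equiv T_2$; $\Gamma\vdash v:T$ if $\vdash\Gamma$, $\emptyset\vdash v:\{x{:}T\mid e\}$; $\Gamma\vdash v:\{x{:}T\mid e\}$ if $\vdash\Gamma$, $\emptyset\vdash v:T$, $\emptyset\vdash\{x{:}T\mid e\}$, $e[v/x]\longrightarrow^*\mathsf{true}$. *)

(* Defs.v *)
(* Binders are represented with de Bruijn indices, with two separate index
   spaces: term variables (x) and type variables (alpha).  Term binders:
   the body of a lambda, the codomain of a dependent arrow x:T1 -> T2, and
   the predicate of a refinement {x:T | e} (also inside the waiting /
   active check forms).  Type binders: Lambda alpha. e and forall alpha. T. *)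
From Stdlib Require Import List Arith Relations.
Import ListNotations.

Definition label := nat.

(* The parameters of the calculus that do not mention types:
   base types B (with a distinguished base type Bool), constants (each
   constant k belongs to K_{kbase k}), the constants true/false, primitive
   operations and their (partial) denotations on tuples of constants. *)
Record sig := MkSig {
  sB : Type;
  sK : Type;
  sO : Type;
  sBool : sB;
  strue : sK;
  sfalse : sK;
  kbase : sK -> sB;     (* k \in K_B  iff  kbase k = B *)
  denot : sO -> list sK -> option sK
}.

Section Syntax.
Context (Sg : sig).

Inductive ty : Type :=
  | TBase (b : sB Sg)
  | TVar (a : nat)
  | TFun (T1 T2 : ty)               (* x:T1 -> T2, x bound in T2 *)
  | TAll (T : ty)
  | TRef (T : ty) (e : tm)          (* {x:T | e}, x bound in e *)
with val : Type :=
  | VConst (k : sK Sg)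
  | VAbs (T : ty) (e : tm)
  | VTAbs (e : tm)
  | VCast (T1 T2 : ty) (l : label)
with tm : Type :=
  | Val (v : val)
  | Var (x : nat)
  | Op (o : sO Sg) (es : list tm)
  | App (e1 e2 : tm)
  | TApp (e : tm) (T : ty)
  | Wait (T1 : ty) (e1 e2 : tm) (l : label)
      (* <<{x:T1 | e1}, e2>>^l, x bound in e1 *)
  | Active (T1 : ty) (e1 e2 : tm) (v : val) (l : label)
      (* <{x:T1 | e1}, e2, v>^l, x bound in e1 *)
  | Blame (l : label).

Fixpoint lift_e_ty (c : nat) (T : ty) : ty :=
  match T with
  | TBase b => TBase b
  | TVar a => TVar a
  | TFun T1 T2 => TFun (lift_e_ty c T1) (lift_e_ty (S c) T2)
  | TAll T' => TAll (lift_e_ty c T')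
  | TRef T' e => TRef (lift_e_ty c T') (lift_e_tm (S c) e)
  end
with lift_e_val (c : nat) (v : val) : val :=
  match v with
  | VConst k => VConst k
  | VAbs T e => VAbs (lift_e_ty c T) (lift_e_tm (S c) e)
  | VTAbs e => VTAbs (lift_e_tm c e)
  | VCast T1 T2 l => VCast (lift_e_ty c T1) (lift_e_ty c T2) l
  end
with lift_e_tm (c : nat) (e : tm) : tm :=
  match e with
  | Val v => Val (lift_e_val c v)
  | Var x => Var (if x <? c then x else S x)
  | Op o es => Op o (map (lift_e_tm c) es)
  | App e1 e2 => App (lift_e_tm c e1) (lift_e_tm c e2)
  | TApp e1 T => TApp (lift_e_tm c e1) (lift_e_ty c T)
  | Wait T1 e1 e2 l => Wait (lift_e_ty c T1) (lift_e_tm (S c) e1) (lift_e_tm c e2) l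
  | Active T1 e1 e2 v l =>
      Active (lift_e_ty c T1) (lift_e_tm (S c) e1) (lift_e_tm c e2) (lift_e_val c v) l
  | Blame l => Blame l
  end.

Fixpoint lift_t_ty (c : nat) (T : ty) : ty :=
  match T with
  | TBase b => TBase b
  | TVar a => TVar (if a <? c then a else S a)
  | TFun T1 T2 => TFun (lift_t_ty c T1) (lift_t_ty c T2)
  | TAll T' => TAll (lift_t_ty (S c) T')
  | TRef T' e => TRef (lift_t_ty c T') (lift_t_tm c e)
  end
with lift_t_val (c : nat) (v : val) : val :=
  match v with
  | VConst k => VConst k
  | VAbs T e => VAbs (lift_t_ty c T) (lift_t_tm c e)
  | VTAbs e => VTAbs (lift_t_tm (S c) e)
  | VCast T1 T2 l => VCast (lift_t_ty c T1) (lift_t_ty c T2) l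
  end
with lift_t_tm (c : nat) (e : tm) : tm :=
  match e with
  | Val v => Val (lift_t_val c v)
  | Var x => Var x
  | Op o es => Op o (map (lift_t_tm c) es)
  | App e1 e2 => App (lift_t_tm c e1) (lift_t_tm c e2)
  | TApp e1 T => TApp (lift_t_tm c e1) (lift_t_ty c T)
  | Wait T1 e1 e2 l => Wait (lift_t_ty c T1) (lift_t_tm c e1) (lift_t_tm c e2) l
  | Active T1 e1 e2 v l =>
      Active (lift_t_ty c T1) (lift_t_tm c e1) (lift_t_tm c e2) (lift_t_val c v) l
  | Blame l => Blame l
  end.

(* e[u/x] where x is term index k: replaces index k by u, and decrements
   term indices > k (the binder of x disappears). *)
Fixpoint subst_e_ty (k : nat) (u : tm) (T : ty) : ty :=
  match T with
  | TBase b => TBase b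
  | TVar a => TVar a
  | TFun T1 T2 => TFun (subst_e_ty k u T1) (subst_e_ty (S k) (lift_e_tm 0 u) T2)
  | TAll T' => TAll (subst_e_ty k (lift_t_tm 0 u) T')
  | TRef T' e => TRef (subst_e_ty k u T') (subst_e_tm (S k) (lift_e_tm 0 u) e)
  end
with subst_e_val (k : nat) (u : tm) (v : val) : val :=
  match v with
  | VConst c => VConst c
  | VAbs T e => VAbs (subst_e_ty k u T) (subst_e_tm (S k) (lift_e_tm 0 u) e)
  | VTAbs e => VTAbs (subst_e_tm k (lift_t_tm 0 u) e)
  | VCast T1 T2 l => VCast (subst_e_ty k u T1) (subst_e_ty k u T2) l
  end
with subst_e_tm (k : nat) (u : tm) (e : tm) : tm :=
  match e with
  | Val v => Val (subst_e_val k u v)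
  | Var x =>
      match Nat.compare x k with
      | Eq => u
      | Lt => Var x
      | Gt => Var (pred x)
      end
  | Op o es => Op o (map (subst_e_tm k u) es)
  | App e1 e2 => App (subst_e_tm k u e1) (subst_e_tm k u e2)
  | TApp e1 T => TApp (subst_e_tm k u e1) (subst_e_ty k u T)
  | Wait T1 e1 e2 l =>
      Wait (subst_e_ty k u T1) (subst_e_tm (S k) (lift_e_tm 0 u) e1) (subst_e_tm k u e2) l
  | Active T1 e1 e2 v l =>
      Active (subst_e_ty k u T1) (subst_e_tm (S k) (lift_e_tm 0 u) e1)
             (subst_e_tm k u e2) (subst_e_val k u v) l
  | Blame l => Blame l
  end.

Fixpoint subst_t_ty (k : nat) (U : ty) (T : ty) : ty :=
  match T with
  | TBase b => TBase b
  | TVar a =>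
      match Nat.compare a k with
      | Eq => U
      | Lt => TVar a
      | Gt => TVar (pred a)
      end
  | TFun T1 T2 => TFun (subst_t_ty k U T1) (subst_t_ty k (lift_e_ty 0 U) T2)
  | TAll T' => TAll (subst_t_ty (S k) (lift_t_ty 0 U) T')
  | TRef T' e => TRef (subst_t_ty k U T') (subst_t_tm k (lift_e_ty 0 U) e)
  end
with subst_t_val (k : nat) (U : ty) (v : val) : val :=
  match v with
  | VConst c => VConst c
  | VAbs T e => VAbs (subst_t_ty k U T) (subst_t_tm k (lift_e_ty 0 U) e)
  | VTAbs e => VTAbs (subst_t_tm (S k) (lift_t_ty 0 U) e)
  | VCast T1 T2 l => VCast (subst_t_ty k U T1) (subst_t_ty k U T2) l
  end
with subst_t_tm (k : nat) (U : ty) (e : tm) : tm :=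
  match e with
  | Val v => Val (subst_t_val k U v)
  | Var x => Var x
  | Op o es => Op o (map (subst_t_tm k U) es)
  | App e1 e2 => App (subst_t_tm k U e1) (subst_t_tm k U e2)
  | TApp e1 T => TApp (subst_t_tm k U e1) (subst_t_ty k U T)
  | Wait T1 e1 e2 l =>
      Wait (subst_t_ty k U T1) (subst_t_tm k (lift_e_ty 0 U) e1) (subst_t_tm k U e2) l
  | Active T1 e1 e2 v l =>
      Active (subst_t_ty k U T1) (subst_t_tm k (lift_e_ty 0 U) e1)
             (subst_t_tm k U e2) (subst_t_val k U v) l
  | Blame l => Blame l
  end.

Definition is_value (e : tm) : Prop := exists v, e = Val v.

Definition is_refinement (T : ty) : Prop :=
  match T with TRef _ _ => True | _ => False end.

Fixpoint unref (T : ty) : ty :=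
  match T with TRef T' _ => unref T' | _ => T end.

Definition const (k : sK Sg) : tm := Val (VConst k).
Definition ttrue : tm := const (strue Sg).
Definition tfalse : tm := const (sfalse Sg).
Definition TBool : ty := TBase (sBool Sg).

Inductive red : tm -> tm -> Prop :=
  | R_Op o ks k :
      denot Sg o ks = Some k ->
      red (Op o (map const ks)) (const k)
  | R_Beta T e v :
      red (App (Val (VAbs T e)) (Val v)) (subst_e_tm 0 (Val v) e)
  | R_TBeta e T :
      red (TApp (Val (VTAbs e)) T) (subst_t_tm 0 T e)
  | R_CastBase b l v :
      red (App (Val (VCast (TBase b) (TBase b) l)) (Val v)) (Val v)
  | R_CastFun T11 T12 T21 T22 l v :
      (* lambda x:T21. let y:T11 = <T21 => T11>^l x in <T12[y/x] => T22>^l (v y);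
         inside the body, y is index 0 and x is index 1 *)
      red (App (Val (VCast (TFun T11 T12) (TFun T21 T22) l)) (Val v))
          (Val (VAbs T21
             (App (Val (VAbs (lift_e_ty 0 T11)
                     (App (Val (VCast (lift_e_ty 1 T12) (lift_e_ty 0 T22) l))
                          (App (Val (lift_e_val 0 (lift_e_val 0 v))) (Var 0)))))
                  (App (Val (VCast (lift_e_ty 0 T21) (lift_e_ty 0 T11) l)) (Var 0)))))
  | R_CastAll T1 T2 l v :
      red (App (Val (VCast (TAll T1) (TAll T2) l)) (Val v))
          (Val (VTAbs (App (Val (VCast T1 T2 l)) (TApp (Val (lift_t_val 0 v)) (TVar 0)))))
  | R_Forget T1 e1 T2 l v :
      red (App (Val (VCast (TRef T1 e1) T2 l)) (Val v)) (App (Val (VCast T1 T2 l)) (Val v))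
  | R_PreCheck T1 T2 e2 l v :
      ~ is_refinement T1 ->
      red (App (Val (VCast T1 (TRef T2 e2) l)) (Val v))
          (Wait T2 e2 (App (Val (VCast T1 T2 l)) (Val v)) l)
  | R_Check T e v l :
      red (Wait T e (Val v) l) (Active T e (subst_e_tm 0 (Val v) e) v l)
  | R_OK T e v l :
      red (Active T e ttrue v l) (Val v)
  | R_Fail T e v l :
      red (Active T e tfalse v l) (Blame l).

Inductive ectx : Type :=
  | EHole
  | EOp (o : sO Sg) (vs : list val) (E : ectx) (es : list tm)
  | EApp1 (E : ectx) (e : tm)
  | EApp2 (v : val) (E : ectx)
  | ETApp (E : ectx) (T : ty)
  | EWait (T : ty) (e : tm) (E : ectx) (l : label)
  | EActive (T : ty) (e : tm) (E : ectx) (v : val) (l : label).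

Fixpoint plug (E : ectx) (e : tm) : tm :=
  match E with
  | EHole => e
  | EOp o vs E' es => Op o (map Val vs ++ plug E' e :: es)
  | EApp1 E' e2 => App (plug E' e) e2
  | EApp2 v E' => App (Val v) (plug E' e)
  | ETApp E' T => TApp (plug E' e) T
  | EWait T e1 E' l => Wait T e1 (plug E' e) l
  | EActive T e1 E' v l => Active T e1 (plug E' e) v l
  end.

Inductive step : tm -> tm -> Prop :=
  | S_Ctx E e1 e2 : red e1 e2 -> step (plug E e1) (plug E e2)
  | S_Blame E l : E <> EHole -> step (plug E (Blame l)) (Blame l).

Definition multistep : tm -> tm -> Prop := clos_refl_trans_1n tm step.

Inductive compat : ty -> ty -> Prop :=
  | C_Base b : compat (TBase b) (TBase b)
  | C_Var a : compat (TVar a) (TVar a)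
  | C_RefL T1 e T2 : compat T1 T2 -> compat (TRef T1 e) T2
  | C_RefR T1 T2 e : compat T1 T2 -> compat T1 (TRef T2 e)
  | C_Fun T11 T12 T21 T22 :
      compat T11 T21 -> compat T12 T22 -> compat (TFun T11 T12) (TFun T21 T22)
  | C_All T1 T2 : compat T1 T2 -> compat (TAll T1) (TAll T2).

Definition conv1 (T1 T2 : ty) : Prop :=
  exists T e1 e2, T1 = subst_e_ty 0 e1 T /\ T2 = subst_e_ty 0 e2 T /\ step e1 e2.

Definition equiv : ty -> ty -> Prop :=
  clos_trans ty (fun A B => conv1 A B \/ conv1 B A).

(* A context is a list of entries, the most recent binding at the head. *)
Inductive entry : Type :=
  | ETm (T : ty)
  | ETy.

Definition ctx := list entry.

(* the type of term variable with index n in Gamma, shifted into Gamma *)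
Fixpoint lookup_tm (G : ctx) (n : nat) : option ty :=
  match G with
  | [] => None
  | ETm T :: G' =>
      match n with
      | 0 => Some (lift_e_ty 0 T)
      | S m => option_map (lift_e_ty 0) (lookup_tm G' m)
      end
  | ETy :: G' => option_map (lift_t_ty 0) (lookup_tm G' n)
  end.

Fixpoint tvar_in (G : ctx) (n : nat) : Prop :=
  match G with
  | [] => False
  | ETm _ :: G' => tvar_in G' n
  | ETy :: G' => match n with 0 => True | S m => tvar_in G' m end
  end.

Fixpoint arity (T : ty) : nat :=
  match T with TFun _ T2 => S (arity T2) | _ => 0 end.

End Syntax.

Arguments TBase {Sg} b.
Arguments TVar {Sg} a.
Arguments TFun {Sg} T1 T2.
Arguments TAll {Sg} T.
Arguments TRef {Sg} T e.
Arguments VConst {Sg} k.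
Arguments VAbs {Sg} T e.
Arguments VTAbs {Sg} e.
Arguments VCast {Sg} T1 T2 l.
Arguments Val {Sg} v.
Arguments Var {Sg} x.
Arguments Op {Sg} o es.
Arguments App {Sg} e1 e2.
Arguments TApp {Sg} e T.
Arguments Wait {Sg} T1 e1 e2 l.
Arguments Active {Sg} T1 e1 e2 v l.
Arguments Blame {Sg} l.
Arguments ETm {Sg} T.
Arguments ETy {Sg}.

Record tysig (Sg : sig) := MkTySig {
  ty_const : sK Sg -> ty Sg;
  ty_op : sO Sg -> ty Sg       (* ty(op) = x1:T1 -> ... -> xn:Tn -> T0 *)
}.
Arguments ty_const {Sg} t k.
Arguments ty_op {Sg} t o.

Section Typing.
Context (Sg : sig) (Sig : tysig Sg).

Inductive wf_ctx : ctx Sg -> Prop :=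
  | WF_Nil : wf_ctx []
  | WF_Tm G T : wf_ctx G -> wf_ty G T -> wf_ctx (ETm T :: G)
  | WF_Ty G : wf_ctx G -> wf_ctx (ETy :: G)
with wf_ty : ctx Sg -> ty Sg -> Prop :=
  | WT_Base G b : wf_ctx G -> wf_ty G (TBase b)
  | WT_Var G a : wf_ctx G -> tvar_in Sg G a -> wf_ty G (TVar a)
  | WT_Fun G T1 T2 : wf_ty G T1 -> wf_ty (ETm T1 :: G) T2 -> wf_ty G (TFun T1 T2)
  | WT_All G T : wf_ty (ETy :: G) T -> wf_ty G (TAll T)
  | WT_Ref G T e : wf_ty G T -> typing (ETm T :: G) e (TBool Sg) -> wf_ty G (TRef T e)
with typing : ctx Sg -> tm Sg -> ty Sg -> Prop :=
  | T_Var G x T : wf_ctx G -> lookup_tm Sg G x = Some T -> typing G (Var x) T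
  | T_Const G k : wf_ctx G -> typing G (Val (VConst k)) (ty_const Sig k)
  | T_Op G o es R :
      wf_ctx G ->
      length es = arity Sg (ty_op Sig o) ->
      args_typed G (ty_op Sig o) es R ->
      typing G (Op o es) R
  | T_Abs G T1 e T2 : typing (ETm T1 :: G) e T2 -> typing G (Val (VAbs T1 e)) (TFun T1 T2)
  | T_Cast G T1 T2 l :
      wf_ty G T1 -> wf_ty G T2 -> compat Sg T1 T2 ->
      (* T1 -> T2 is x:T1 -> T2 with x not free in T2, hence the shift *)
      typing G (Val (VCast T1 T2 l)) (TFun T1 (lift_e_ty Sg 0 T2))
  | T_App G e1 e2 T1 T2 :
      typing G e1 (TFun T1 T2) -> typing G e2 T1 -> wf_ty G (subst_e_ty Sg 0 e2 T2) ->
      typing G (App e1 e2) (subst_e_ty Sg 0 e2 T2)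
  | T_TAbs G e T : typing (ETy :: G) e T -> typing G (Val (VTAbs e)) (TAll T)
  | T_TApp G e T1 T2 :
      typing G e (TAll T1) -> wf_ty G T2 -> typing G (TApp e T2) (subst_t_ty Sg 0 T2 T1)
  | T_Wait G T1 e1 e2 l :
      wf_ty G (TRef T1 e1) -> typing G e2 T1 -> typing G (Wait T1 e1 e2 l) (TRef T1 e1)
  | T_Active G T1 e1 e2 v l :
      wf_ctx G -> wf_ty [] (TRef T1 e1) -> typing [] (Val v) T1 ->
      typing [] e2 (TBool Sg) -> multistep Sg (subst_e_tm Sg 0 (Val v) e1) e2 ->
      typing G (Active T1 e1 e2 v l) (TRef T1 e1)
  | T_Blame G T l : wf_ctx G -> wf_ty [] T -> typing G (Blame l) T
  | T_Conv G e T1 T2 :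
      wf_ctx G -> typing [] e T1 -> wf_ty [] T2 -> equiv Sg T1 T2 -> typing G e T2
  | T_Forget G v T e :
      wf_ctx G -> typing [] (Val v) (TRef T e) -> typing G (Val v) T
  | T_Exact G v T e :
      wf_ctx G -> typing [] (Val v) T -> wf_ty [] (TRef T e) ->
      multistep Sg (subst_e_tm Sg 0 (Val v) e) (ttrue Sg) ->
      typing G (Val v) (TRef T e)
(* args_typed G T es R: with T = x1:T1 -> ... -> xn:Tn -> T0 and es = e1..en,
   each ei : Ti[e1/x1,...,e(i-1)/x(i-1)] and R = T0[e1/x1,...,en/xn] *)
with args_typed : ctx Sg -> ty Sg -> list (tm Sg) -> ty Sg -> Prop :=
  | AT_Nil G T : args_typed G T [] T
  | AT_Cons G e es T1 T2 R :
      typing G e T1 -> args_typed G (subst_e_ty Sg 0 e T2) es R ->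
      args_typed G (TFun T1 T2) (e :: es) R.

End Typing.

Section Assumptions.
Context (Sg : sig) (Sig : tysig Sg).

Definition is_base (T : ty Sg) : Prop := exists b, T = TBase b.

Definition const_ok (l : label) (T : ty Sg) (k : sK Sg) : Prop :=
  unref Sg T = TBase (kbase Sg k) /\
  multistep Sg (App (Val (VCast (unref Sg T) T l)) (const Sg k)) (const Sg k).

Fixpoint op_shape (T : ty Sg) : Prop :=
  match T with
  | TFun T1 T2 => is_base (unref Sg T1) /\ op_shape T2
  | _ => is_base (unref Sg T)
  end.

Fixpoint op_args_ok (l : label) (T : ty Sg) (ks : list (sK Sg)) : Prop :=
  match ks with
  | [] => True
  | k :: ks' =>
      match T with
      | TFun T1 T2 => const_ok l T1 k /\ op_args_ok l (subst_e_ty Sg 0 (const Sg k) T2) ks'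
      | _ => False
      end
  end.

Fixpoint op_result (T : ty Sg) (ks : list (sK Sg)) : ty Sg :=
  match ks with
  | [] => T
  | k :: ks' =>
      match T with
      | TFun _ T2 => op_result (subst_e_ty Sg 0 (const Sg k) T2) ks'
      | _ => T
      end
  end.

Definition FH_assumptions : Prop :=
  kbase Sg (strue Sg) = sBool Sg /\ kbase Sg (sfalse Sg) = sBool Sg /\
  strue Sg <> sfalse Sg /\
  (forall k, kbase Sg k = sBool Sg -> k = strue Sg \/ k = sfalse Sg) /\
  (forall k,
     unref Sg (ty_const Sig k) = TBase (kbase Sg k) /\
     wf_ty Sg Sig [] (ty_const Sig k) /\
     forall l, multistep Sg (App (Val (VCast (TBase (kbase Sg k)) (ty_const Sig k) l))
                                 (const Sg k)) (const Sg k)) /\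
  (forall o,
     op_shape (ty_op Sig o) /\
     forall l (ks : list (sK Sg)),
       length ks = arity Sg (ty_op Sig o) ->
       (op_args_ok l (ty_op Sig o) ks ->
          exists k, denot Sg o ks = Some k /\ const_ok l (op_result (ty_op Sig o) ks) k) /\
       (~ op_args_ok l (ty_op Sig o) ks -> denot Sg o ks = None)).

End Assumptions.

(* Main.v *)
Require Import Defs.
From Stdlib Require Import List Arith Lia Relations.
Import ListNotations.

Section Ind.
Context (Sg : sig) (Pt : ty Sg -> Prop) (Pv : val Sg -> Prop) (Pe : tm Sg -> Prop).
Hypothesis HBase : forall b, Pt (TBase b).
Hypothesis HTVar : forall a, Pt (TVar a).
Hypothesis HFun : forall T1 T2, Pt T1 -> Pt T2 -> Pt (TFun T1 T2).
Hypothesis HAll : forall T, Pt T -> Pt (TAll T).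
Hypothesis HRef : forall T e, Pt T -> Pe e -> Pt (TRef T e).
Hypothesis HConst : forall k, Pv (VConst k).
Hypothesis HAbs : forall T e, Pt T -> Pe e -> Pv (VAbs T e).
Hypothesis HTAbs : forall e, Pe e -> Pv (VTAbs e).
Hypothesis HCast : forall T1 T2 l, Pt T1 -> Pt T2 -> Pv (VCast T1 T2 l).
Hypothesis HVal : forall v, Pv v -> Pe (Val v).
Hypothesis HVar : forall x, Pe (Var x).
Hypothesis HOp : forall o es, Forall Pe es -> Pe (Op o es).
Hypothesis HApp : forall e1 e2, Pe e1 -> Pe e2 -> Pe (App e1 e2).
Hypothesis HTApp : forall e T, Pe e -> Pt T -> Pe (TApp e T).
Hypothesis HWait : forall T e1 e2 l, Pt T -> Pe e1 -> Pe e2 -> Pe (Wait T e1 e2 l).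
Hypothesis HActive : forall T e1 e2 v l, Pt T -> Pe e1 -> Pe e2 -> Pv v -> Pe (Active T e1 e2 v l).
Hypothesis HBlame : forall l, Pe (Blame l).

Fixpoint ty_ind' (T : ty Sg) : Pt T :=
  match T with
  | TBase b => HBase b
  | TVar a => HTVar a
  | TFun T1 T2 => HFun T1 T2 (ty_ind' T1) (ty_ind' T2)
  | TAll T => HAll T (ty_ind' T)
  | TRef T e => HRef T e (ty_ind' T) (tm_ind' e)
  end
with val_ind' (v : val Sg) : Pv v :=
  match v with
  | VConst k => HConst k
  | VAbs T e => HAbs T e (ty_ind' T) (tm_ind' e)
  | VTAbs e => HTAbs e (tm_ind' e)
  | VCast T1 T2 l => HCast T1 T2 l (ty_ind' T1) (ty_ind' T2)
  end
with tm_ind' (e : tm Sg) : Pe e :=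
  match e with
  | Val v => HVal v (val_ind' v)
  | Var x => HVar x
  | Op o es => HOp o es ((fix F (l : list (tm Sg)) : Forall Pe l :=
                 match l with
                 | nil => Forall_nil _
                 | cons x l' => Forall_cons _ (tm_ind' x) (F l')
                 end) es)
  | App e1 e2 => HApp e1 e2 (tm_ind' e1) (tm_ind' e2)
  | TApp e T => HTApp e T (tm_ind' e) (ty_ind' T)
  | Wait T e1 e2 l => HWait T e1 e2 l (ty_ind' T) (tm_ind' e1) (tm_ind' e2)
  | Active T e1 e2 v l => HActive T e1 e2 v l (ty_ind' T) (tm_ind' e1) (tm_ind' e2) (val_ind' v)
  | Blame l => HBlame l
  end.

Definition mut_ind : (forall T, Pt T) /\ (forall v, Pv v) /\ (forall e, Pe e) :=
  conj ty_ind' (conj val_ind' tm_ind').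
End Ind.

Arguments Nat.compare : simpl never.
Arguments Nat.ltb : simpl never.
Ltac arith := repeat (simpl in *; match goal with
  | |- context [?a <? ?b] => destruct (Nat.ltb_spec a b)
  | |- context [Nat.compare ?a ?b] => destruct (Nat.compare_spec a b)
  end); simpl in *; try lia; try reflexivity; try (f_equal; lia).

Lemma map_ext_Forall {A B} (f g : A -> B) l : Forall (fun x => f x = g x) l -> map f l = map g l.
Proof. induction 1; simpl; f_equal; auto. Qed.

Ltac mind P1 P2 P3 := 
  apply (mut_ind _ P1 P2 P3); intros; simpl;
  try solve [f_equal; auto].

Section Lemmas.
Context (Sg : sig).
Notation Le_ty := (lift_e_ty Sg).
Notation Le_val := (lift_e_val Sg).
Notation Le := (lift_e_tm Sg).
Notation Lt_ty := (lift_t_ty Sg).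
Notation Lt_val := (lift_t_val Sg).
Notation Lt := (lift_t_tm Sg).
Notation Se_ty := (subst_e_ty Sg).
Notation Se_val := (subst_e_val Sg).
Notation Se := (subst_e_tm Sg).
Notation St_ty := (subst_t_ty Sg).
Notation St_val := (subst_t_val Sg).
Notation St := (subst_t_tm Sg).

Lemma lift_ee :
  (forall T c d, d <= c -> Le_ty (S c) (Le_ty d T) = Le_ty d (Le_ty c T)) /\
  (forall v c d, d <= c -> Le_val (S c) (Le_val d v) = Le_val d (Le_val c v)) /\
  (forall e c d, d <= c -> Le (S c) (Le d e) = Le d (Le c e)).
Proof.
  mind (fun T => forall c d, d <= c -> Le_ty (S c) (Le_ty d T) = Le_ty d (Le_ty c T))
       (fun v => forall c d, d <= c -> Le_val (S c) (Le_val d v) = Le_val d (Le_val c v))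
       (fun e => forall c d, d <= c -> Le (S c) (Le d e) = Le d (Le c e));
  try solve [f_equal; auto with arith].
  - arith.
  - f_equal. rewrite !map_map. apply map_ext_Forall.
    eapply Forall_impl; [|eassumption]. simpl; auto.
Qed.

Ltac lcase := f_equal; rewrite ?map_map; apply map_ext_Forall;
    eapply Forall_impl; [|eassumption]; simpl; intros; eauto.

Ltac uselem L := first [ apply (proj1 L) | apply (proj1 (proj2 L)) | apply (proj2 (proj2 L)) ].
Ltac cl L := first [ reflexivity | solve [uselem L; lia] | solve [symmetry; uselem L; lia] ].

Lemma lift_te :
  (forall T c d, Lt_ty c (Le_ty d T) = Le_ty d (Lt_ty c T)) /\
  (forall v c d, Lt_val c (Le_val d v) = Le_val d (Lt_val c v)) /\
  (forall e c d, Lt c (Le d e) = Le d (Lt c e)).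
Proof.
  mind (fun T => forall c d, Lt_ty c (Le_ty d T) = Le_ty d (Lt_ty c T))
       (fun v => forall c d, Lt_val c (Le_val d v) = Le_val d (Lt_val c v))
       (fun e => forall c d, Lt c (Le d e) = Le d (Lt c e)).
  lcase.
Qed.

Lemma lift_tt :
  (forall T c d, d <= c -> Lt_ty (S c) (Lt_ty d T) = Lt_ty d (Lt_ty c T)) /\
  (forall v c d, d <= c -> Lt_val (S c) (Lt_val d v) = Lt_val d (Lt_val c v)) /\
  (forall e c d, d <= c -> Lt (S c) (Lt d e) = Lt d (Lt c e)).
Proof.
  mind (fun T => forall c d, d <= c -> Lt_ty (S c) (Lt_ty d T) = Lt_ty d (Lt_ty c T))
       (fun v => forall c d, d <= c -> Lt_val (S c) (Lt_val d v) = Lt_val d (Lt_val c v))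
       (fun e => forall c d, d <= c -> Lt (S c) (Lt d e) = Lt d (Lt c e));
  try solve [f_equal; auto with arith].
  - arith.
  - lcase.
Qed.

Lemma cancel_e :
  (forall T d x, Se_ty d x (Le_ty d T) = T) /\
  (forall v d x, Se_val d x (Le_val d v) = v) /\
  (forall e d x, Se d x (Le d e) = e).
Proof.
  mind (fun T => forall d x, Se_ty d x (Le_ty d T) = T)
       (fun v => forall d x, Se_val d x (Le_val d v) = v)
       (fun e => forall d x, Se d x (Le d e) = e).
  - arith.
  - f_equal. rewrite map_map. rewrite <- map_id. apply map_ext_Forall.
    eapply Forall_impl; [|eassumption]. simpl; auto.
Qed.

Lemma cancel_t :
  (forall T d x, St_ty d x (Lt_ty d T) = T) /\
  (forall v d x, St_val d x (Lt_val d v) = v) /\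
  (forall e d x, St d x (Lt d e) = e).
Proof.
  mind (fun T => forall d x, St_ty d x (Lt_ty d T) = T)
       (fun v => forall d x, St_val d x (Lt_val d v) = v)
       (fun e => forall d x, St d x (Lt d e) = e).
  - arith.
  - f_equal. rewrite map_map. rewrite <- map_id. apply map_ext_Forall.
    eapply Forall_impl; [|eassumption]. simpl; auto.
Qed.

Ltac clx := fail.
Ltac finish := first [ reflexivity
  | match goal with H : _ |- _ => rewrite H by lia end; f_equal; finish2
  | match goal with H : _ |- _ => rewrite <- H by lia end; f_equal; finish2 ]
with finish2 := try solve [ clall | f_equal; clall ]
with clall := first [ reflexivity | cl lift_ee | cl lift_te | cl lift_tt | cl cancel_e | cl cancel_t | clx ].

Lemma subst_lift_ee :
  (forall T, forall k u d, d <= k -> Se_ty (S k) (Le d u) (Le_ty d T) = Le_ty d (Se_ty k u T)) /\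
  (forall v, forall k u d, d <= k -> Se_val (S k) (Le d u) (Le_val d v) = Le_val d (Se_val k u v)) /\
  (forall e, forall k u d, d <= k -> Se (S k) (Le d u) (Le d e) = Le d (Se k u e)).
Proof.
  mind (fun T => forall k u d, d <= k -> Se_ty (S k) (Le d u) (Le_ty d T) = Le_ty d (Se_ty k u T)) (fun v => forall k u d, d <= k -> Se_val (S k) (Le d u) (Le_val d v) = Le_val d (Se_val k u v)) (fun e => forall k u d, d <= k -> Se (S k) (Le d u) (Le d e) = Le d (Se k u e));
  try solve [lcase; try (rewrite ?H by lia); auto]; try solve [arith; rewrite (proj2 (proj2 cancel_e)); auto];
  f_equal; try solve [ eauto with arith | finish ].
Qed.

Lemma subst_lift_et :
  (forall T, forall k u d, Se_ty k (Lt d u) (Lt_ty d T) = Lt_ty d (Se_ty k u T)) /\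
  (forall v, forall k u d, Se_val k (Lt d u) (Lt_val d v) = Lt_val d (Se_val k u v)) /\
  (forall e, forall k u d, Se k (Lt d u) (Lt d e) = Lt d (Se k u e)).
Proof.
  mind (fun T => forall k u d, Se_ty k (Lt d u) (Lt_ty d T) = Lt_ty d (Se_ty k u T)) (fun v => forall k u d, Se_val k (Lt d u) (Lt_val d v) = Lt_val d (Se_val k u v)) (fun e => forall k u d, Se k (Lt d u) (Lt d e) = Lt d (Se k u e));
  try solve [lcase; try (rewrite ?H by lia); auto]; try solve [arith; auto];
  f_equal; try solve [ eauto with arith | finish ].
Qed.

Lemma subst_lift_te :
  (forall T, forall k U d, St_ty k (Le_ty d U) (Le_ty d T) = Le_ty d (St_ty k U T)) /\
  (forall v, forall k U d, St_val k (Le_ty d U) (Le_val d v) = Le_val d (St_val k U v)) /\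
  (forall e, forall k U d, St k (Le_ty d U) (Le d e) = Le d (St k U e)).
Proof.
  mind (fun T => forall k U d, St_ty k (Le_ty d U) (Le_ty d T) = Le_ty d (St_ty k U T)) (fun v => forall k U d, St_val k (Le_ty d U) (Le_val d v) = Le_val d (St_val k U v)) (fun e => forall k U d, St k (Le_ty d U) (Le d e) = Le d (St k U e));
  try solve [lcase; try (rewrite ?H by lia); auto]; try solve [arith; auto];
  f_equal; try solve [ eauto with arith | finish ].
Qed.

Lemma subst_lift_tt :
  (forall T, forall k U d, d <= k -> St_ty (S k) (Lt_ty d U) (Lt_ty d T) = Lt_ty d (St_ty k U T)) /\
  (forall v, forall k U d, d <= k -> St_val (S k) (Lt_ty d U) (Lt_val d v) = Lt_val d (St_val k U v)) /\
  (forall e, forall k U d, d <= k -> St (S k) (Lt_ty d U) (Lt d e) = Lt d (St k U e)).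
Proof.
  mind (fun T => forall k U d, d <= k -> St_ty (S k) (Lt_ty d U) (Lt_ty d T) = Lt_ty d (St_ty k U T)) (fun v => forall k U d, d <= k -> St_val (S k) (Lt_ty d U) (Lt_val d v) = Lt_val d (St_val k U v)) (fun e => forall k U d, d <= k -> St (S k) (Lt_ty d U) (Lt d e) = Lt d (St k U e));
  try solve [lcase; try (rewrite ?H by lia); auto]; try solve [arith; auto];
  f_equal; try solve [ eauto with arith | finish ].
Qed.

Ltac clx ::= first [cl subst_lift_ee | cl subst_lift_et | cl subst_lift_te | cl subst_lift_tt].

Lemma lift_subst_ee :
  (forall T, forall c d w, d <= c -> Le_ty c (Se_ty d w T) = Se_ty d (Le c w) (Le_ty (S c) T)) /\
  (forall v, forall c d w, d <= c -> Le_val c (Se_val d w v) = Se_val d (Le c w) (Le_val (S c) v)) /\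
  (forall e, forall c d w, d <= c -> Le c (Se d w e) = Se d (Le c w) (Le (S c) e)).
Proof.
  mind (fun T => forall c d w, d <= c -> Le_ty c (Se_ty d w T) = Se_ty d (Le c w) (Le_ty (S c) T)) (fun v => forall c d w, d <= c -> Le_val c (Se_val d w v) = Se_val d (Le c w) (Le_val (S c) v)) (fun e => forall c d w, d <= c -> Le c (Se d w e) = Se d (Le c w) (Le (S c) e));
  try solve [lcase; try (rewrite ?H by lia); auto]; try solve [arith; auto];
  f_equal; try solve [ eauto with arith | finish ].
Qed.

Lemma lift_subst_te :
  (forall T, forall c d w, Lt_ty c (Se_ty d w T) = Se_ty d (Lt c w) (Lt_ty c T)) /\
  (forall v, forall c d w, Lt_val c (Se_val d w v) = Se_val d (Lt c w) (Lt_val c v)) /\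
  (forall e, forall c d w, Lt c (Se d w e) = Se d (Lt c w) (Lt c e)).
Proof.
  mind (fun T => forall c d w, Lt_ty c (Se_ty d w T) = Se_ty d (Lt c w) (Lt_ty c T)) (fun v => forall c d w, Lt_val c (Se_val d w v) = Se_val d (Lt c w) (Lt_val c v)) (fun e => forall c d w, Lt c (Se d w e) = Se d (Lt c w) (Lt c e));
  try solve [lcase; try (rewrite ?H by lia); auto]; try solve [arith; auto];
  f_equal; try solve [ eauto with arith | finish ].
Qed.

Lemma lift_subst_et :
  (forall T, forall c d W, Le_ty c (St_ty d W T) = St_ty d (Le_ty c W) (Le_ty c T)) /\
  (forall v, forall c d W, Le_val c (St_val d W v) = St_val d (Le_ty c W) (Le_val c v)) /\
  (forall e, forall c d W, Le c (St d W e) = St d (Le_ty c W) (Le c e)).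
Proof.
  mind (fun T => forall c d W, Le_ty c (St_ty d W T) = St_ty d (Le_ty c W) (Le_ty c T)) (fun v => forall c d W, Le_val c (St_val d W v) = St_val d (Le_ty c W) (Le_val c v)) (fun e => forall c d W, Le c (St d W e) = St d (Le_ty c W) (Le c e));
  try solve [lcase; try (rewrite ?H by lia); auto]; try solve [arith; auto];
  f_equal; try solve [ eauto with arith | finish ].
Qed.

Lemma lift_subst_tt :
  (forall T, forall c d W, d <= c -> Lt_ty c (St_ty d W T) = St_ty d (Lt_ty c W) (Lt_ty (S c) T)) /\
  (forall v, forall c d W, d <= c -> Lt_val c (St_val d W v) = St_val d (Lt_ty c W) (Lt_val (S c) v)) /\
  (forall e, forall c d W, d <= c -> Lt c (St d W e) = St d (Lt_ty c W) (Lt (S c) e)).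
Proof.
  mind (fun T => forall c d W, d <= c -> Lt_ty c (St_ty d W T) = St_ty d (Lt_ty c W) (Lt_ty (S c) T)) (fun v => forall c d W, d <= c -> Lt_val c (St_val d W v) = St_val d (Lt_ty c W) (Lt_val (S c) v)) (fun e => forall c d W, d <= c -> Lt c (St d W e) = St d (Lt_ty c W) (Lt (S c) e));
  try solve [lcase; try (rewrite ?H by lia); auto]; try solve [arith; auto];
  f_equal; try solve [ eauto with arith | finish ].
Qed.

Ltac clx ::= first [cl subst_lift_ee | cl subst_lift_et | cl subst_lift_te | cl subst_lift_tt | cl lift_subst_ee | cl lift_subst_te | cl lift_subst_et | cl lift_subst_tt].

Lemma subst_subst_ee :
  (forall T, forall k u d w, d <= k -> Se_ty k u (Se_ty d w T) = Se_ty d (Se k u w) (Se_ty (S k) (Le d u) T)) /\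
  (forall v, forall k u d w, d <= k -> Se_val k u (Se_val d w v) = Se_val d (Se k u w) (Se_val (S k) (Le d u) v)) /\
  (forall e, forall k u d w, d <= k -> Se k u (Se d w e) = Se d (Se k u w) (Se (S k) (Le d u) e)).
Proof.
  mind (fun T => forall k u d w, d <= k -> Se_ty k u (Se_ty d w T) = Se_ty d (Se k u w) (Se_ty (S k) (Le d u) T)) (fun v => forall k u d w, d <= k -> Se_val k u (Se_val d w v) = Se_val d (Se k u w) (Se_val (S k) (Le d u) v)) (fun e => forall k u d w, d <= k -> Se k u (Se d w e) = Se d (Se k u w) (Se (S k) (Le d u) e));
  try solve [lcase; try (rewrite ?H by lia); auto]; try solve [arith; try (rewrite (proj2 (proj2 cancel_e))); auto];
  f_equal; try solve [ eauto with arith | finish ].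
Qed.

Lemma subst_subst_te :
  (forall T, forall k U d w, St_ty k U (Se_ty d w T) = Se_ty d (St k U w) (St_ty k (Le_ty d U) T)) /\
  (forall v, forall k U d w, St_val k U (Se_val d w v) = Se_val d (St k U w) (St_val k (Le_ty d U) v)) /\
  (forall e, forall k U d w, St k U (Se d w e) = Se d (St k U w) (St k (Le_ty d U) e)).
Proof.
  mind (fun T => forall k U d w, St_ty k U (Se_ty d w T) = Se_ty d (St k U w) (St_ty k (Le_ty d U) T)) (fun v => forall k U d w, St_val k U (Se_val d w v) = Se_val d (St k U w) (St_val k (Le_ty d U) v)) (fun e => forall k U d w, St k U (Se d w e) = Se d (St k U w) (St k (Le_ty d U) e));
  try solve [lcase; try (rewrite ?H by lia); auto]; try solve [arith; try (rewrite (proj1 cancel_e)); auto];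
  f_equal; try solve [ eauto with arith | finish ].
Qed.

Lemma subst_subst_et :
  (forall T, forall k u d W, Se_ty k u (St_ty d W T) = St_ty d (Se_ty k u W) (Se_ty k (Lt d u) T)) /\
  (forall v, forall k u d W, Se_val k u (St_val d W v) = St_val d (Se_ty k u W) (Se_val k (Lt d u) v)) /\
  (forall e, forall k u d W, Se k u (St d W e) = St d (Se_ty k u W) (Se k (Lt d u) e)).
Proof.
  mind (fun T => forall k u d W, Se_ty k u (St_ty d W T) = St_ty d (Se_ty k u W) (Se_ty k (Lt d u) T)) (fun v => forall k u d W, Se_val k u (St_val d W v) = St_val d (Se_ty k u W) (Se_val k (Lt d u) v)) (fun e => forall k u d W, Se k u (St d W e) = St d (Se_ty k u W) (Se k (Lt d u) e));
  try solve [lcase; try (rewrite ?H by lia); auto]; try solve [arith; try (rewrite (proj2 (proj2 cancel_t))); auto];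
  f_equal; try solve [ eauto with arith | finish ].
Qed.

Lemma subst_subst_tt :
  (forall T, forall k U d W, d <= k -> St_ty k U (St_ty d W T) = St_ty d (St_ty k U W) (St_ty (S k) (Lt_ty d U) T)) /\
  (forall v, forall k U d W, d <= k -> St_val k U (St_val d W v) = St_val d (St_ty k U W) (St_val (S k) (Lt_ty d U) v)) /\
  (forall e, forall k U d W, d <= k -> St k U (St d W e) = St d (St_ty k U W) (St (S k) (Lt_ty d U) e)).
Proof.
  mind (fun T => forall k U d W, d <= k -> St_ty k U (St_ty d W T) = St_ty d (St_ty k U W) (St_ty (S k) (Lt_ty d U) T)) (fun v => forall k U d W, d <= k -> St_val k U (St_val d W v) = St_val d (St_ty k U W) (St_val (S k) (Lt_ty d U) v)) (fun e => forall k U d W, d <= k -> St k U (St d W e) = St d (St_ty k U W) (St (S k) (Lt_ty d U) e));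
  try solve [lcase; try (rewrite ?H by lia); auto]; try solve [arith; try (rewrite (proj1 cancel_t)); auto];
  f_equal; try solve [ eauto with arith | finish ].
Qed.

End Lemmas.

Arguments Nat.compare : simpl never.
Arguments Nat.ltb : simpl never.

Section Ops.
Context (Sg : sig).
Notation Le_ty := (lift_e_ty Sg).
Notation Le_val := (lift_e_val Sg).
Notation Le := (lift_e_tm Sg).
Notation Lt_ty := (lift_t_ty Sg).
Notation Lt_val := (lift_t_val Sg).
Notation Lt := (lift_t_tm Sg).
Notation Se_ty := (subst_e_ty Sg).
Notation Se_val := (subst_e_val Sg).
Notation Se := (subst_e_tm Sg).
Notation St_ty := (subst_t_ty Sg).
Notation St_val := (subst_t_val Sg).
Notation St := (subst_t_tm Sg).
Notation tm := (tm Sg).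
Notation ty := (ty Sg).
Notation val := (val Sg).

Inductive op := OLe (c : nat) | OLt (c : nat) | OSe (k : nat) (u : tm) | OSt (k : nat) (U : ty).

Definition app_ty (s : op) (T : ty) : ty :=
  match s with OLe c => Le_ty c T | OLt c => Lt_ty c T | OSe k u => Se_ty k u T | OSt k U => St_ty k U T end.
Definition app_val (s : op) (v : val) : val :=
  match s with OLe c => Le_val c v | OLt c => Lt_val c v | OSe k u => Se_val k u v | OSt k U => St_val k U v end.
Definition app_tm (s : op) (e : tm) : tm :=
  match s with OLe c => Le c e | OLt c => Lt c e | OSe k u => Se k u e | OSt k U => St k U e end.
Definition up_e (s : op) : op :=
  match s with OLe c => OLe (S c) | OLt c => OLt c | OSe k u => OSe (S k) (Le 0 u) | OSt k U => OSt k (Le_ty 0 U) end.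
Definition up_t (s : op) : op :=
  match s with OLe c => OLe c | OLt c => OLt (S c) | OSe k u => OSe k (Lt 0 u) | OSt k U => OSt (S k) (Lt_ty 0 U) end.

Lemma app_Val s v : app_tm s (Val v) = Val (app_val s v). Proof. destruct s; reflexivity. Qed.
Lemma app_App s a b : app_tm s (App a b) = App (app_tm s a) (app_tm s b). Proof. destruct s; reflexivity. Qed.
Lemma app_TApp s a T : app_tm s (TApp a T) = TApp (app_tm s a) (app_ty s T). Proof. destruct s; reflexivity. Qed.
Lemma app_Op s o es : app_tm s (Op o es) = Op o (map (app_tm s) es). Proof. destruct s; reflexivity. Qed.
Lemma app_Wait s T e1 e2 l : app_tm s (Wait T e1 e2 l) = Wait (app_ty s T) (app_tm (up_e s) e1) (app_tm s e2) l.
Proof. destruct s; reflexivity. Qed.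
Lemma app_Active s T e1 e2 v l : app_tm s (Active T e1 e2 v l) =
  Active (app_ty s T) (app_tm (up_e s) e1) (app_tm s e2) (app_val s v) l.
Proof. destruct s; reflexivity. Qed.
Lemma app_Blame s l : app_tm s (Blame l) = Blame l. Proof. destruct s; reflexivity. Qed.
Lemma app_VConst s k : app_val s (VConst k) = VConst k. Proof. destruct s; reflexivity. Qed.
Lemma app_VAbs s T e : app_val s (VAbs T e) = VAbs (app_ty s T) (app_tm (up_e s) e). Proof. destruct s; reflexivity. Qed.
Lemma app_VTAbs s e : app_val s (VTAbs e) = VTAbs (app_tm (up_t s) e). Proof. destruct s; reflexivity. Qed.
Lemma app_VCast s T1 T2 l : app_val s (VCast T1 T2 l) = VCast (app_ty s T1) (app_ty s T2) l. Proof. destruct s; reflexivity. Qed.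
Lemma app_TBase s b : app_ty s (TBase b) = TBase b. Proof. destruct s; reflexivity. Qed.
Lemma app_TFun s A B : app_ty s (TFun A B) = TFun (app_ty s A) (app_ty (up_e s) B). Proof. destruct s; reflexivity. Qed.
Lemma app_TAll s A : app_ty s (TAll A) = TAll (app_ty (up_t s) A). Proof. destruct s; reflexivity. Qed.
Lemma app_TRef s A e : app_ty s (TRef A e) = TRef (app_ty s A) (app_tm (up_e s) e). Proof. destruct s; reflexivity. Qed.

Hint Rewrite app_Val app_App app_TApp app_Op app_Wait app_Active app_Blame app_VConst app_VAbs
  app_VTAbs app_VCast app_TBase app_TFun app_TAll app_TRef : appdb.

Lemma upe_var0 s : app_tm (up_e s) (Var 0) = Var 0.
Proof. destruct s; simpl; arith. Qed.
Lemma upt_tvar0 s : app_ty (up_t s) (TVar 0) = TVar 0.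
Proof. destruct s; simpl; arith. Qed.

Lemma upe_lift_ty s x : app_ty (up_e s) (Le_ty 0 x) = Le_ty 0 (app_ty s x).
Proof. destruct s; simpl.
  - apply (proj1 (lift_ee Sg)); lia.
  - apply (proj1 (lift_te Sg)).
  - apply (proj1 (subst_lift_ee Sg)); lia.
  - apply (proj1 (subst_lift_te Sg)).
Qed.
Lemma upe_lift_val s x : app_val (up_e s) (Le_val 0 x) = Le_val 0 (app_val s x).
Proof. destruct s; simpl.
  - apply (proj1 (proj2 (lift_ee Sg))); lia.
  - apply (proj1 (proj2 (lift_te Sg))).
  - apply (proj1 (proj2 (subst_lift_ee Sg))); lia.
  - apply (proj1 (proj2 (subst_lift_te Sg))).
Qed.
Lemma upe_lift_tm s x : app_tm (up_e s) (Le 0 x) = Le 0 (app_tm s x).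
Proof. destruct s; simpl.
  - apply (proj2 (proj2 (lift_ee Sg))); lia.
  - apply (proj2 (proj2 (lift_te Sg))).
  - apply (proj2 (proj2 (subst_lift_ee Sg))); lia.
  - apply (proj2 (proj2 (subst_lift_te Sg))).
Qed.
Lemma upt_lift_ty s x : app_ty (up_t s) (Lt_ty 0 x) = Lt_ty 0 (app_ty s x).
Proof. destruct s; simpl.
  - symmetry; apply (proj1 (lift_te Sg)).
  - apply (proj1 (lift_tt Sg)); lia.
  - apply (proj1 (subst_lift_et Sg)).
  - apply (proj1 (subst_lift_tt Sg)); lia.
Qed.
Lemma upt_lift_val s x : app_val (up_t s) (Lt_val 0 x) = Lt_val 0 (app_val s x).
Proof. destruct s; simpl.
  - symmetry; apply (proj1 (proj2 (lift_te Sg))).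
  - apply (proj1 (proj2 (lift_tt Sg))); lia.
  - apply (proj1 (proj2 (subst_lift_et Sg))).
  - apply (proj1 (proj2 (subst_lift_tt Sg))); lia.
Qed.
Lemma upt_lift_tm s x : app_tm (up_t s) (Lt 0 x) = Lt 0 (app_tm s x).
Proof. destruct s; simpl.
  - symmetry; apply (proj2 (proj2 (lift_te Sg))).
  - apply (proj2 (proj2 (lift_tt Sg))); lia.
  - apply (proj2 (proj2 (subst_lift_et Sg))).
  - apply (proj2 (proj2 (subst_lift_tt Sg))); lia.
Qed.
Lemma upee_lift1_ty s x : app_ty (up_e (up_e s)) (Le_ty 1 x) = Le_ty 1 (app_ty (up_e s) x).
Proof. destruct s; simpl.
  - apply (proj1 (lift_ee Sg)); lia.
  - apply (proj1 (lift_te Sg)).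
  - rewrite <- (proj2 (proj2 (lift_ee Sg)) u 0 0) by lia.
    apply (proj1 (subst_lift_ee Sg)); lia.
  - rewrite <- (proj1 (lift_ee Sg) U 0 0) by lia.
    apply (proj1 (subst_lift_te Sg)).
Qed.
Lemma app_subst_e s w e : app_tm s (Se 0 w e) = Se 0 (app_tm s w) (app_tm (up_e s) e).
Proof. destruct s; simpl.
  - apply (proj2 (proj2 (lift_subst_ee Sg))); lia.
  - apply (proj2 (proj2 (lift_subst_te Sg))).
  - apply (proj2 (proj2 (subst_subst_ee Sg))); lia.
  - apply (proj2 (proj2 (subst_subst_te Sg))).
Qed.
Lemma app_subst_t s W e : app_tm s (St 0 W e) = St 0 (app_ty s W) (app_tm (up_t s) e).
Proof. destruct s; simpl.
  - apply (proj2 (proj2 (lift_subst_et Sg))).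
  - apply (proj2 (proj2 (lift_subst_tt Sg))); lia.
  - apply (proj2 (proj2 (subst_subst_et Sg))).
  - apply (proj2 (proj2 (subst_subst_tt Sg))); lia.
Qed.

Hint Rewrite upe_var0 upt_tvar0 upe_lift_ty upe_lift_val upe_lift_tm upt_lift_ty upt_lift_val
  upt_lift_tm upee_lift1_ty app_subst_e app_subst_t : appdb.

Definition pcok (s : op) (j : nat) : Prop := match s with OSt k _ => j <> k | _ => True end.

Lemma app_const s k : app_tm s (const Sg k) = const Sg k.
Proof. destruct s; reflexivity. Qed.

Lemma red_app s r r' : red Sg r r' ->
  (forall j T2 l v, r = App (Val (VCast (TVar j) T2 l)) (Val v) -> pcok s j) ->
  red Sg (app_tm s r) (app_tm s r').
Proof.
  intros H Hok; destruct H; autorewrite with appdb.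
  - rewrite map_map. replace (map (fun x => app_tm s (const Sg x)) ks) with (map (const Sg) ks).
    + rewrite app_const; constructor; auto.
    + apply map_ext; intros; rewrite app_const; auto.
  - constructor.
  - constructor.
  - constructor.
  - constructor.
  - constructor.
  - constructor.
  - constructor. destruct T1; simpl in *; try tauto; destruct s; simpl; auto.
    specialize (Hok a _ _ _ eq_refl). simpl in Hok. arith.
  - constructor.
  - unfold ttrue, const; autorewrite with appdb; constructor.
  - unfold tfalse, const; autorewrite with appdb; constructor.
Qed.
End Ops.

Arguments Nat.compare : simpl never.
Arguments Nat.ltb : simpl never.

Hint Rewrite app_Val app_App app_TApp app_Op app_Wait app_Active app_Blame app_VConst app_VAbs
  app_VTAbs app_VCast app_TBase app_TFun app_TAll app_TRef : appdb.
Hint Rewrite upe_var0 upt_tvar0 upe_lift_ty upe_lift_val upe_lift_tm upt_lift_ty upt_lift_val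
  upt_lift_tm upee_lift1_ty app_subst_e app_subst_t : appdb.

Section CStep.
Context (Sg : sig).
Notation tm := (tm Sg).
Notation ty := (ty Sg).
Notation val := (val Sg).
Notation red := (red Sg).
Hypothesis Hneq : strue Sg <> sfalse Sg.

Inductive cstep : tm -> tm -> Prop :=
 | CS_Red e e' : red e e' -> cstep e e'
 | CS_App1 e1 e1' e2 : cstep e1 e1' -> cstep (App e1 e2) (App e1' e2)
 | CS_App2 v e2 e2' : cstep e2 e2' -> cstep (App (Val v) e2) (App (Val v) e2')
 | CS_TApp e e' T : cstep e e' -> cstep (TApp e T) (TApp e' T)
 | CS_Wait T e1 e2 e2' l : cstep e2 e2' -> cstep (Wait T e1 e2 l) (Wait T e1 e2' l)
 | CS_Active T e1 e2 e2' v l : cstep e2 e2' -> cstep (Active T e1 e2 v l) (Active T e1 e2' v l)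
 | CS_Op o vs e e' es : cstep e e' ->
     cstep (Op o (map Val vs ++ e :: es)) (Op o (map Val vs ++ e' :: es))
 | CS_BApp1 l e2 : cstep (App (Blame l) e2) (Blame l)
 | CS_BApp2 v l : cstep (App (Val v) (Blame l)) (Blame l)
 | CS_BTApp l T : cstep (TApp (Blame l) T) (Blame l)
 | CS_BWait T e1 l l' : cstep (Wait T e1 (Blame l) l') (Blame l)
 | CS_BActive T e1 v l l' : cstep (Active T e1 (Blame l) v l') (Blame l)
 | CS_BOp o vs l es : cstep (Op o (map Val vs ++ Blame l :: es)) (Blame l).

Definition csteps := clos_refl_trans_1n tm cstep.

Inductive pc : tm -> nat -> Prop :=
 | PC_Here j T2 l v : pc (App (Val (VCast (TVar j) T2 l)) (Val v)) j
 | PC_App1 e1 e2 j : pc e1 j -> pc (App e1 e2) j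
 | PC_App2 v e2 j : pc e2 j -> pc (App (Val v) e2) j
 | PC_TApp e T j : pc e j -> pc (TApp e T) j
 | PC_Wait T e1 e2 l j : pc e2 j -> pc (Wait T e1 e2 l) j
 | PC_Active T e1 e2 v l j : pc e2 j -> pc (Active T e1 e2 v l) j
 | PC_Op o vs e es j : pc e j -> pc (Op o (map Val vs ++ e :: es)) j.

Definition notval (e : tm) := forall v, e <> Val v.

Lemma red_notval e e' : red e e' -> notval e.
Proof. destruct 1; intros w Hw; discriminate. Qed.
Lemma cstep_notval e e' : cstep e e' -> notval e.
Proof. destruct 1; try (intros w Hw; discriminate). eapply red_notval; eauto. Qed.
Lemma red_blame l e : red (Blame l) e -> False.
Proof. inversion 1. Qed.
Lemma cstep_blame l e : cstep (Blame l) e -> False.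
Proof. inversion 1; subst. eapply red_blame; eauto. Qed.
Lemma cstep_val v e : cstep (Val v) e -> False.
Proof. intros H; apply cstep_notval in H; eapply H; eauto. Qed.

Lemma list_dec (vs1 vs2 : list val) x1 x2 l1 l2 :
  map Val vs1 ++ x1 :: l1 = map Val vs2 ++ x2 :: l2 -> notval x1 -> notval x2 ->
  vs1 = vs2 /\ x1 = x2 /\ l1 = l2.
Proof.
  revert vs2; induction vs1 as [|a vs1 IH]; intros [|b vs2]; simpl; intros H N1 N2; inversion H; subst.
  - auto.
  - exfalso; eapply N1; eauto.
  - exfalso; eapply N2; eauto.
  - destruct (IH vs2) as [? [? ?]]; auto; subst; auto.
Qed.

Lemma map_const_dec (ks : list (sK Sg)) vs x es :
  map (const Sg) ks = map Val vs ++ x :: es -> exists k, x = const Sg k.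
Proof.
  revert ks; induction vs; intros [|k ks]; simpl; intros H; inversion H; subst; eauto.
Qed.

Lemma map_inj' {A B} (f : A -> B) (l1 l2 : list A) :
  (forall a b, f a = f b -> a = b) -> map f l1 = map f l2 -> l1 = l2.
Proof. intros Hf; revert l2; induction l1; intros [|b l2]; simpl; intros H; inversion H; auto.
  f_equal; auto. Qed.

Lemma red_det e e1 e2 : red e e1 -> red e e2 -> e1 = e2.
Proof.
  intros H1 H2; destruct H1; inversion H2; subst; auto; try (simpl in *; tauto); try discriminate.
  - assert (ks0 = ks) by (apply (map_inj' (const Sg)); [intros a b Hab; unfold const in Hab; inversion Hab; auto | auto]).
    subst; congruence.
  - exfalso; apply Hneq; congruence.
Qed.

Lemma red_App_inv e1 e2 e : red (App e1 e2) e -> (exists v, e1 = Val v) /\ (exists v, e2 = Val v).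
Proof. inversion 1; subst; eauto. Qed.
Lemma red_TApp_inv e1 T e : red (TApp e1 T) e -> (exists v, e1 = Val v).
Proof. inversion 1; subst; eauto. Qed.
Lemma red_Wait_inv T e1 e2 l e : red (Wait T e1 e2 l) e -> (exists v, e2 = Val v).
Proof. inversion 1; subst; eauto. Qed.
Lemma red_Active_inv T e1 e2 v l e : red (Active T e1 e2 v l) e -> (exists v, e2 = Val v).
Proof. inversion 1; subst; unfold ttrue, tfalse, const; eauto. Qed.
Lemma red_Op_inv o es e : red (Op o es) e -> exists ks, es = map (const Sg) ks.
Proof. inversion 1; subst; eauto. Qed.

Ltac nv := match goal with
  | H : cstep (Val _) _ |- _ => exfalso; eapply cstep_val; exact H
  | H : cstep (Blame _) _ |- _ => exfalso; eapply cstep_blame; exact H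
  | H : red (Blame _) _ |- _ => exfalso; eapply red_blame; exact H
  | H : red (App _ _) _ |- _ => let H1 := fresh in let H2 := fresh in
       destruct (red_App_inv _ _ _ H) as [[? H1] [? H2]]; subst; try discriminate; nv
  | H : red (TApp _ _) _ |- _ => let H1 := fresh in
       destruct (red_TApp_inv _ _ _ H) as [? H1]; subst; try discriminate; nv
  | H : red (Wait _ _ _ _) _ |- _ => let H1 := fresh in
       destruct (red_Wait_inv _ _ _ _ _ H) as [? H1]; subst; try discriminate; nv
  | H : red (Active _ _ _ _ _) _ |- _ => let H1 := fresh in
       destruct (red_Active_inv _ _ _ _ _ _ H) as [? H1]; subst; try discriminate; nv
  end.

Lemma cstep_det e e1 e2 : cstep e e1 -> cstep e e2 -> e1 = e2.
Proof.
  intros H; revert e2; induction H; intros e3 H3; inversion H3; subst; try reflexivity;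
    try solve [nv]; try solve [f_equal; auto].
  { eapply red_det; eauto. }
  all: try (match goal with Hr : red (Op _ _) _ |- _ =>
         let ks := fresh "ks" in let Hks := fresh "Hks" in let k := fresh "k" in
         destruct (red_Op_inv _ _ _ Hr) as [ks Hks];
         (symmetry in Hks || idtac);
         first [ destruct (map_const_dec _ _ _ _ Hks) as [k ?] | 
                 destruct (map_const_dec _ _ _ _ (eq_sym Hks)) as [k ?] ];
         unfold const in *; subst; solve [nv | discriminate] end).
  all: match goal with Heq : map Val _ ++ _ :: _ = map Val _ ++ _ :: _ |- _ =>
         let a := fresh in let b := fresh in let c := fresh in
         destruct (list_dec _ _ _ _ _ _ Heq) as [a [b c]];
         [ try (eapply cstep_notval; eassumption); try (intros ? ?; discriminate)
         | try (eapply cstep_notval; eassumption); try (intros ? ?; discriminate)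
         | subst; try solve [nv]; try solve [repeat f_equal; auto]; try congruence ] end.
Qed.

Lemma map_app_Val (s : op Sg) (vs : list val) : map (app_tm Sg s) (map Val vs) = map Val (map (app_val Sg s) vs).
Proof. rewrite !map_map; apply map_ext; intros; apply app_Val. Qed.

Lemma pc_notval e j : pc e j -> notval e.
Proof. destruct 1; intros w Hw; discriminate. Qed.
Lemma pc_val v j : pc (Val v) j -> False.
Proof. intros H; apply pc_notval in H; eapply H; eauto. Qed.
Lemma pc_blame l j : pc (Blame l) j -> False.
Proof. inversion 1. Qed.

Lemma cstep_app s x y : cstep x y -> (forall j, pc x j -> pcok Sg s j) ->
  cstep (app_tm Sg s x) (app_tm Sg s y).
Proof.
  induction 1; intros Hok; autorewrite with appdb.
  - constructor. apply red_app; auto. intros; subst; apply Hok; constructor.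
  - constructor; apply IHcstep; intros; apply Hok; eauto using pc.
  - constructor; apply IHcstep; intros; apply Hok; eauto using pc.
  - constructor; apply IHcstep; intros; apply Hok; eauto using pc.
  - constructor; apply IHcstep; intros; apply Hok; eauto using pc.
  - constructor; apply IHcstep; intros; apply Hok; eauto using pc.
  - rewrite !map_app; simpl; rewrite !map_app_Val. apply CS_Op; apply IHcstep; intros; apply Hok; eauto using pc.
  - solve [eauto using cstep].
  - solve [eauto using cstep].
  - solve [eauto using cstep].
  - solve [eauto using cstep].
  - solve [eauto using cstep].
  - rewrite map_app; simpl; rewrite map_app_Val, app_Blame. apply CS_BOp.
Qed.

Lemma app_ty_TVar s T j : app_ty Sg s T = TVar j -> exists i, T = TVar i.
Proof. destruct T; destruct s; simpl; intros H; try discriminate; eauto. Qed.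

Lemma app_tm_Val s x v : app_tm Sg s x = Val v -> (exists w, x = Val w) \/ (exists n, x = Var n).
Proof. destruct x; destruct s; simpl; intros H; try discriminate; eauto. Qed.

Lemma cstep_var n e : cstep (Var n) e -> False.
Proof. inversion 1; subst. inversion H0. Qed.

Lemma cstep_app_notval s x y : cstep x y -> notval (app_tm Sg s x).
Proof.
  intros H v Hv. destruct (app_tm_Val _ _ _ Hv) as [[w ->]|[n ->]].
  - eapply cstep_val; eauto.
  - eapply cstep_var; eauto.
Qed.

Ltac pcv := match goal with
  | H : pc (Val _) _ |- _ => exfalso; eapply pc_val; exact H
  | H : pc (Blame _) _ |- _ => exfalso; eapply pc_blame; exact H
  end.

Lemma pc_app s x y j' : cstep x y -> pc (app_tm Sg s x) j' ->
  exists j, pc x j /\ app_ty Sg s (TVar j) = TVar j'.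
Proof.
  intros H; revert j'; induction H; intros j' Hp; autorewrite with appdb in Hp.
  - destruct H; autorewrite with appdb in Hp; inversion Hp; subst; try pcv.
    + rewrite map_map in *.
      assert (Hm : map (fun x => app_tm Sg s (const Sg x)) ks = map (const Sg) ks)
        by (apply map_ext; intros; apply app_const).
      match goal with Hq : map Val _ ++ _ :: _ = _ |- _ => rewrite Hm in Hq; symmetry in Hq;
        destruct (map_const_dec _ _ _ _ Hq) as [k' Hk] end.
      subst. unfold const in *. pcv.
    + match goal with Hq : TVar _ = app_ty Sg s T1 |- _ => symmetry in Hq;
        destruct (app_ty_TVar _ _ _ Hq) as [i ->]; exists i; split; [eauto using pc|auto] end.
    + unfold ttrue, const in *; autorewrite with appdb in *; pcv.
    + unfold tfalse, const in *; autorewrite with appdb in *; pcv.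
  - inversion Hp; subst.
    + exfalso; eapply (cstep_app_notval s _ _ H); eauto.
    + destruct (IHcstep _ H3) as [j [? ?]]; exists j; split; [eauto using pc|]; auto.
    + exfalso; eapply (cstep_app_notval s _ _ H); eauto.
  - inversion Hp; subst; try pcv.
    + exfalso; eapply (cstep_app_notval s _ _ H); eauto.
    + destruct (IHcstep _ H3) as [j [? ?]]; exists j; split; [eauto using pc|]; auto.
  - inversion Hp; subst. destruct (IHcstep _ H3) as [j [? ?]]; exists j; split; [eauto using pc|]; auto.
  - inversion Hp; subst. destruct (IHcstep _ H5) as [j [? ?]]; exists j; split; [eauto using pc|]; auto.
  - inversion Hp; subst. destruct (IHcstep _ H6) as [j [? ?]]; exists j; split; [eauto using pc|]; auto.
  - rewrite map_app in Hp; simpl in Hp; rewrite map_app_Val in Hp. inversion Hp; subst.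
    match goal with Hq : map Val _ ++ _ :: _ = map Val _ ++ _ :: _ |- _ =>
      destruct (list_dec _ _ _ _ _ _ Hq) as [? [? ?]] end;
      [eapply pc_notval; eauto | eapply cstep_app_notval; eauto |].
    subst. match goal with Hpc : pc (app_tm _ _ e) _ |- _ =>
      destruct (IHcstep _ Hpc) as [j [? ?]] end; exists j; split; [eauto using pc|]; auto.
  - inversion Hp; subst; try pcv; discriminate.
  - inversion Hp; subst; try pcv; discriminate.
  - inversion Hp; subst; try pcv.
  - inversion Hp; subst; try pcv.
  - inversion Hp; subst; try pcv.
  - rewrite map_app in Hp; simpl in Hp; rewrite map_app_Val, ?app_Blame in Hp. inversion Hp; subst.
    match goal with Hq : map Val _ ++ _ :: _ = map Val _ ++ _ :: _ |- _ =>
      destruct (list_dec _ _ _ _ _ _ Hq) as [? [? ?]] end;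
      [eapply pc_notval; eauto | intros ? ?; discriminate |].
    subst; pcv.
Qed.

Definition valid (m : nat) (s : op Sg) (m' : nat) : Prop :=
  match s with
  | OLe _ _ | OSe _ _ _ => m' = m
  | OLt _ c => c <= m /\ m' = S m
  | OSt _ k _ => k < m /\ m = S m'
  end.

Fixpoint apps (ops : list (op Sg)) (x : tm) : tm :=
  match ops with [] => x | s :: r => apps r (app_tm Sg s x) end.
Fixpoint vseq (m : nat) (ops : list (op Sg)) : Prop :=
  match ops with [] => True | s :: r => exists m', valid m s m' /\ vseq m' r end.

Definition pcinv m x := forall j, pc x j -> m <= j.

Lemma cstep_ops ops : forall m x y, vseq m ops -> pcinv m x -> cstep x y -> cstep (apps ops x) (apps ops y).
Proof.
  induction ops as [|s ops IH]; simpl; intros m x y Hv Hp Hs; auto.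
  destruct Hv as [m' [Hva Hv]].
  apply (IH m'); auto.
  - intros j' Hj'. destruct (pc_app _ _ _ _ Hs Hj') as [j [Hj Heq]].
    specialize (Hp _ Hj). destruct s; simpl in *; subst.
    + inversion Heq; subst; lia.
    + revert Heq; arith; intros Heq; inversion Heq; lia.
    + inversion Heq; subst; lia.
    + destruct Hva as [Hk ->]. revert Heq; arith; intros Heq; inversion Heq; lia.
  - apply cstep_app; auto. intros j Hj. specialize (Hp _ Hj). destruct s; simpl in *; auto; lia.
Qed.

Definition gd1 m a a0 := forall ops, vseq m ops -> cstep (apps ops a) (apps ops a0).

Lemma cstep_gd x y : cstep x y -> gd1 0 x y.
Proof. intros H ops Hv. eapply cstep_ops; eauto. intros j _; lia. Qed.

Lemma gd1_cstep m a a0 : gd1 m a a0 -> cstep a a0.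
Proof. intros H; apply (H []); simpl; auto. Qed.

Lemma gd1_app m a a0 s m' : gd1 m a a0 -> valid m s m' -> gd1 m' (app_tm Sg s a) (app_tm Sg s a0).
Proof. intros H Hv ops Hops. apply (H (s :: ops)). simpl; eauto. Qed.
End CStep.

Arguments Nat.compare : simpl never.
Arguments Nat.ltb : simpl never.

Hint Rewrite app_Val app_App app_TApp app_Op app_Wait app_Active app_Blame app_VConst app_VAbs
  app_VTAbs app_VCast app_TBase app_TFun app_TAll app_TRef : appdb.
Hint Rewrite upe_var0 upt_tvar0 upe_lift_ty upe_lift_val upe_lift_tm upt_lift_ty upt_lift_val
  upt_lift_tm upee_lift1_ty app_subst_e app_subst_t : appdb.

Section PRel.
Context (Sg : sig).
Hypothesis Hneq : strue Sg <> sfalse Sg.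
Notation tm := (tm Sg).
Notation ty := (ty Sg).
Notation val := (val Sg).
Notation gd1 := (gd1 Sg).

Inductive Pty : nat -> ty -> ty -> Prop :=
 | PT_Base m b : Pty m (TBase b) (TBase b)
 | PT_Var m a : Pty m (TVar a) (TVar a)
 | PT_Fun m A1 A2 B1 B2 : Pty m A1 B1 -> Pty m A2 B2 -> Pty m (TFun A1 A2) (TFun B1 B2)
 | PT_All m A B : Pty (S m) A B -> Pty m (TAll A) (TAll B)
 | PT_Ref m A B e e' : Pty m A B -> Ptm m e e' -> Pty m (TRef A e) (TRef B e')
with Pval : nat -> val -> val -> Prop :=
 | PV_Const m k : Pval m (VConst k) (VConst k)
 | PV_Abs m T T' e e' : Pty m T T' -> Ptm m e e' -> Pval m (VAbs T e) (VAbs T' e')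
 | PV_TAbs m e e' : Ptm (S m) e e' -> Pval m (VTAbs e) (VTAbs e')
 | PV_Cast m A A' B B' l : Pty m A A' -> Pty m B B' -> Pval m (VCast A B l) (VCast A' B' l)
with Ptm : nat -> tm -> tm -> Prop :=
 | P_Val m v v' : Pval m v v' -> Ptm m (Val v) (Val v')
 | P_Var m x : Ptm m (Var x) (Var x)
 | P_Op m o es es' : Plist m es es' -> Ptm m (Op o es) (Op o es')
 | P_App m a1 a2 b1 b2 : Ptm m a1 b1 -> Ptm m a2 b2 -> Ptm m (App a1 a2) (App b1 b2)
 | P_TApp m a b T T' : Ptm m a b -> Pty m T T' -> Ptm m (TApp a T) (TApp b T')
 | P_Wait m T T' e1 e1' e2 e2' l : Pty m T T' -> Ptm m e1 e1' -> Ptm m e2 e2' ->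
     Ptm m (Wait T e1 e2 l) (Wait T' e1' e2' l)
 | P_Active m T T' e1 e1' e2 e2' v v' l : Pty m T T' -> Ptm m e1 e1' -> Ptm m e2 e2' -> Pval m v v' ->
     Ptm m (Active T e1 e2 v l) (Active T' e1' e2' v' l)
 | P_Blame m l : Ptm m (Blame l) (Blame l)
 | P_Step m a a0 b : gd1 m a a0 -> Ptm m a0 b -> Ptm m a b
with Plist : nat -> list tm -> list tm -> Prop :=
 | PL_nil m : Plist m [] []
 | PL_cons m a b l l' : Ptm m a b -> Plist m l l' -> Plist m (a :: l) (b :: l').

Scheme Pty_mut := Induction for Pty Sort Prop
with Pval_mut := Induction for Pval Sort Prop
with Ptm_mut := Induction for Ptm Sort Prop
with Plist_mut := Induction for Plist Sort Prop.
Combined Scheme P_mutind from Pty_mut, Pval_mut, Ptm_mut, Plist_mut.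

Lemma P_refl : (forall T m, Pty m T T) /\ (forall v m, Pval m v v) /\ (forall e m, Ptm m e e).
Proof.
  apply (mut_ind Sg (fun T => forall m, Pty m T T) (fun v => forall m, Pval m v v) (fun e => forall m, Ptm m e e));
  intros; try (constructor; auto).
  induction H; constructor; auto.
Qed.

Section Closure.
Variable R : nat -> op Sg -> op Sg -> nat -> Prop.
Hypothesis HRv : forall m s s' m', R m s s' m' -> valid Sg m s m'.
Hypothesis HRe : forall m s s' m', R m s s' m' -> R m (up_e Sg s) (up_e Sg s') m'.
Hypothesis HRt : forall m s s' m', R m s s' m' -> R (S m) (up_t Sg s) (up_t Sg s') (S m').
Hypothesis HRvar : forall m s s' m', R m s s' m' -> forall x, Ptm m' (app_tm Sg s (Var x)) (app_tm Sg s' (Var x)).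
Hypothesis HRtvar : forall m s s' m', R m s s' m' -> forall a, Pty m' (app_ty Sg s (TVar a)) (app_ty Sg s' (TVar a)).

Lemma P_app_gen :
  (forall m T T', Pty m T T' -> forall s s' m', R m s s' m' -> Pty m' (app_ty Sg s T) (app_ty Sg s' T')) /\
  (forall m v v', Pval m v v' -> forall s s' m', R m s s' m' -> Pval m' (app_val Sg s v) (app_val Sg s' v')) /\
  (forall m e e', Ptm m e e' -> forall s s' m', R m s s' m' -> Ptm m' (app_tm Sg s e) (app_tm Sg s' e')) /\
  (forall m l l', Plist m l l' -> forall s s' m', R m s s' m' -> Plist m' (map (app_tm Sg s) l) (map (app_tm Sg s') l')).
Proof.
  apply P_mutind; intros; autorewrite with appdb; try solve [constructor; eauto]; eauto.
  - eapply P_Step; [eapply gd1_app; eauto | eauto].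
Qed.
End Closure.

Definition R1 (m : nat) (s s' : op Sg) (m' : nat) : Prop :=
  s = s' /\ ((exists c, s = OLe Sg c /\ m' = m) \/ (exists c, s = OLt Sg c /\ c <= m /\ m' = S m)).

Lemma P_lift :
  (forall m T T', Pty m T T' -> forall s s' m', R1 m s s' m' -> Pty m' (app_ty Sg s T) (app_ty Sg s' T')) /\
  (forall m v v', Pval m v v' -> forall s s' m', R1 m s s' m' -> Pval m' (app_val Sg s v) (app_val Sg s' v')) /\
  (forall m e e', Ptm m e e' -> forall s s' m', R1 m s s' m' -> Ptm m' (app_tm Sg s e) (app_tm Sg s' e')) /\
  (forall m l l', Plist m l l' -> forall s s' m', R1 m s s' m' -> Plist m' (map (app_tm Sg s) l) (map (app_tm Sg s') l')).
Proof.
  apply P_app_gen; unfold R1.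
  - intros m s s' m' [-> [[c [-> ->]]|[c [-> [? ->]]]]]; simpl; auto.
  - intros m s s' m' [-> [[c [-> ->]]|[c [-> [? ->]]]]]; simpl; split; eauto.
  - intros m s s' m' [-> [[c [-> ->]]|[c [-> [? ->]]]]]; simpl; split; eauto.
    right; exists (S c); split; auto; lia.
  - intros m s s' m' [-> [[c [-> ->]]|[c [-> [? ->]]]]]; simpl; intros; constructor.
  - intros m s s' m' [-> [[c [-> ->]]|[c [-> [? ->]]]]]; simpl; intros; constructor.
Qed.

Lemma Ptm_lift_e m e e' : Ptm m e e' -> Ptm m (lift_e_tm Sg 0 e) (lift_e_tm Sg 0 e').
Proof. intros H; apply (proj1 (proj2 (proj2 P_lift)) _ _ _ H (OLe Sg 0) (OLe Sg 0) m). split; eauto. Qed.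
Lemma Pty_lift_e m e e' : Pty m e e' -> Pty m (lift_e_ty Sg 0 e) (lift_e_ty Sg 0 e').
Proof. intros H; apply (proj1 P_lift _ _ _ H (OLe Sg 0) (OLe Sg 0) m). split; eauto. Qed.
Lemma Ptm_lift_t m e e' : Ptm m e e' -> Ptm (S m) (lift_t_tm Sg 0 e) (lift_t_tm Sg 0 e').
Proof. intros H; apply (proj1 (proj2 (proj2 P_lift)) _ _ _ H (OLt Sg 0) (OLt Sg 0) (S m)). split; auto.
  right; exists 0; split; auto; lia. Qed.
Lemma Pty_lift_t m e e' : Pty m e e' -> Pty (S m) (lift_t_ty Sg 0 e) (lift_t_ty Sg 0 e').
Proof. intros H; apply (proj1 P_lift _ _ _ H (OLt Sg 0) (OLt Sg 0) (S m)). split; auto.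
  right; exists 0; split; auto; lia. Qed.

Definition R2 (m : nat) (s s' : op Sg) (m' : nat) : Prop :=
  R1 m s s' m' \/
  (exists k u u', s = OSe Sg k u /\ s' = OSe Sg k u' /\ m' = m /\ Ptm m u u') \/
  (exists k U U', s = OSt Sg k U /\ s' = OSt Sg k U' /\ k < m /\ m = S m' /\ Pty m' U U').

Lemma P_subst :
  (forall m T T', Pty m T T' -> forall s s' m', R2 m s s' m' -> Pty m' (app_ty Sg s T) (app_ty Sg s' T')) /\
  (forall m v v', Pval m v v' -> forall s s' m', R2 m s s' m' -> Pval m' (app_val Sg s v) (app_val Sg s' v')) /\
  (forall m e e', Ptm m e e' -> forall s s' m', R2 m s s' m' -> Ptm m' (app_tm Sg s e) (app_tm Sg s' e')) /\
  (forall m l l', Plist m l l' -> forall s s' m', R2 m s s' m' -> Plist m' (map (app_tm Sg s) l) (map (app_tm Sg s') l')).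
Proof.
  apply P_app_gen; unfold R2, R1.
  - intros m s s' m' [[-> [[c [-> ->]]|[c [-> [? ->]]]]]|[[k [u [u' [-> [-> [-> ?]]]]]]|[k [U [U' [-> [-> [? [-> ?]]]]]]]]];
      simpl; auto.
  - intros m s s' m' [[-> [[c [-> ->]]|[c [-> [? ->]]]]]|[[k [u [u' [-> [-> [-> ?]]]]]]|[k [U [U' [-> [-> [? [-> ?]]]]]]]]];
      simpl.
    + left; split; eauto.
    + left; split; eauto.
    + right; left; do 3 eexists; repeat split; eauto using Ptm_lift_e.
    + right; right; do 3 eexists; repeat split; eauto using Pty_lift_e.
  - intros m s s' m' [[-> [[c [-> ->]]|[c [-> [? ->]]]]]|[[k [u [u' [-> [-> [-> ?]]]]]]|[k [U [U' [-> [-> [? [-> ?]]]]]]]]];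
      simpl.
    + left; split; eauto.
    + left; split; auto. right; exists (S c); split; auto; lia.
    + right; left; do 3 eexists; repeat split; eauto using Ptm_lift_t.
    + right; right; do 3 eexists; repeat split; eauto using Pty_lift_t; lia.
  - intros m s s' m' [[-> [[c [-> ->]]|[c [-> [? ->]]]]]|[[k [u [u' [-> [-> [-> ?]]]]]]|[k [U [U' [-> [-> [? [-> ?]]]]]]]]];
      simpl; intros x; try constructor.
    arith; auto; constructor.
  - intros m s s' m' [[-> [[c [-> ->]]|[c [-> [? ->]]]]]|[[k [u [u' [-> [-> [-> ?]]]]]]|[k [U [U' [-> [-> [? [-> ?]]]]]]]]];
      simpl; intros x; try constructor.
    arith; auto; constructor.
Qed.

Lemma Ptm_subst_e0 m e e' u u' : Ptm m e e' -> Ptm m u u' ->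
  Ptm m (subst_e_tm Sg 0 u e) (subst_e_tm Sg 0 u' e').
Proof. intros H Hu. apply (proj1 (proj2 (proj2 P_subst)) _ _ _ H (OSe Sg 0 u) (OSe Sg 0 u') m).
  right; left; do 3 eexists; eauto. Qed.
Lemma Pty_subst_e0 m e e' u u' : Pty m e e' -> Ptm m u u' ->
  Pty m (subst_e_ty Sg 0 u e) (subst_e_ty Sg 0 u' e').
Proof. intros H Hu. apply (proj1 P_subst _ _ _ H (OSe Sg 0 u) (OSe Sg 0 u') m).
  right; left; do 3 eexists; eauto. Qed.
Lemma Ptm_subst_t0 m e e' U U' : Ptm (S m) e e' -> Pty m U U' ->
  Ptm m (subst_t_tm Sg 0 U e) (subst_t_tm Sg 0 U' e').
Proof. intros H Hu. apply (proj1 (proj2 (proj2 P_subst)) _ _ _ H (OSt Sg 0 U) (OSt Sg 0 U') m).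
  right; right; do 3 eexists; repeat split; eauto; lia. Qed.
Lemma Pval_lift_e m v v' : Pval m v v' -> Pval m (lift_e_val Sg 0 v) (lift_e_val Sg 0 v').
Proof. intros H; apply (proj1 (proj2 P_lift) _ _ _ H (OLe Sg 0) (OLe Sg 0) m). split; eauto. Qed.
Lemma Pty_lift_e1 m e e' : Pty m e e' -> Pty m (lift_e_ty Sg 1 e) (lift_e_ty Sg 1 e').
Proof. intros H; apply (proj1 P_lift _ _ _ H (OLe Sg 1) (OLe Sg 1) m). split; eauto. Qed.
Lemma Pval_lift_t m v v' : Pval m v v' -> Pval (S m) (lift_t_val Sg 0 v) (lift_t_val Sg 0 v').
Proof. intros H; apply (proj1 (proj2 P_lift) _ _ _ H (OLt Sg 0) (OLt Sg 0) (S m)). split; auto.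
  right; exists 0; split; auto; lia. Qed.
End PRel.

Local Hint Constructors cstep : cs.
Section Sim.
Context (Sg : sig).
Hypothesis Hneq : strue Sg <> sfalse Sg.
Notation tm := (tm Sg).
Notation ty := (ty Sg).
Notation val := (val Sg).
Notation cstep := (cstep Sg).
Notation csteps := (csteps Sg).
Notation Ptm := (Ptm Sg).
Notation Pty := (Pty Sg).
Notation Pval := (Pval Sg).
Notation Plist := (Plist Sg).

Lemma csteps_refl x : csteps x x.
Proof. constructor. Qed.
Lemma csteps_one x y : cstep x y -> csteps x y.
Proof. intros; econstructor; eauto; constructor. Qed.
Lemma csteps_trans x y z : csteps x y -> csteps y z -> csteps x z.
Proof. induction 1; intros; auto. econstructor; eauto. apply IHclos_refl_trans_1n; auto. Qed.
Lemma csteps_map (F : tm -> tm) : (forall x y, cstep x y -> cstep (F x) (F y)) ->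
  forall x y, csteps x y -> csteps (F x) (F y).
Proof. intros HF x y; induction 1; [constructor|econstructor; eauto]. Qed.

Lemma cs_App1 e2 x y : csteps x y -> csteps (App x e2) (App y e2).
Proof. apply (csteps_map (fun x => App x e2)); intros; apply CS_App1; auto. Qed.
Lemma cs_App2 v x y : csteps x y -> csteps (App (Val v) x) (App (Val v) y).
Proof. apply (csteps_map (fun x => App (Val v) x)); intros; apply CS_App2; auto. Qed.
Lemma cs_TApp T x y : csteps x y -> csteps (TApp x T) (TApp y T).
Proof. apply (csteps_map (fun x => TApp x T)); intros; apply CS_TApp; auto. Qed.
Lemma cs_Wait T e l x y : csteps x y -> csteps (Wait T e x l) (Wait T e y l).
Proof. apply (csteps_map (fun x => Wait T e x l)); intros; apply CS_Wait; auto. Qed.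
Lemma cs_Active T e v l x y : csteps x y -> csteps (Active T e x v l) (Active T e y v l).
Proof. apply (csteps_map (fun x => Active T e x v l)); intros; apply CS_Active; auto. Qed.
Lemma cs_Op o vs es x y : csteps x y -> csteps (Op o (map Val vs ++ x :: es)) (Op o (map Val vs ++ y :: es)).
Proof. apply (csteps_map (fun x => Op o (map Val vs ++ x :: es))); intros; apply CS_Op; auto. Qed.

Definition cong m (a b : tm) : Prop :=
  match a, b with
  | Val v, Val v' => Pval m v v'
  | Var x, Var y => x = y
  | Op o es, Op o' es' => o = o' /\ Plist m es es'
  | App a1 a2, App b1 b2 => Ptm m a1 b1 /\ Ptm m a2 b2
  | TApp a T, TApp b T' => Ptm m a b /\ Pty m T T'
  | Wait T e1 e2 l, Wait T' e1' e2' l' => Pty m T T' /\ Ptm m e1 e1' /\ Ptm m e2 e2' /\ l = l'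
  | Active T e1 e2 v l, Active T' e1' e2' v' l' =>
      Pty m T T' /\ Ptm m e1 e1' /\ Ptm m e2 e2' /\ Pval m v v' /\ l = l'
  | Blame l, Blame l' => l = l'
  | _, _ => False
  end.

Lemma cong_Ptm m a b : cong m a b -> Ptm m a b.
Proof.
  destruct a; destruct b; simpl; intros H; try contradiction;
    repeat match goal with H : _ /\ _ |- _ => destruct H end; subst; econstructor; eauto.
Qed.

Lemma Ptm_cases m a b : Ptm m a b -> (exists a0, gd1 Sg m a a0 /\ Ptm m a0 b) \/ cong m a b.
Proof. destruct 1; simpl; eauto 10. Qed.

Lemma Ptm_unstep a b : Ptm 0 a b -> exists a1, csteps a a1 /\ cong 0 a1 b.
Proof.
  induction 1; try solve [eexists; split; [apply csteps_refl | simpl; eauto 10]].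
  destruct IHPtm as [a1 [? ?]]. exists a1; split; auto.
  econstructor; eauto. eapply gd1_cstep; eauto.
Qed.

Lemma Ptm_val_fwd m v y : Ptm m (Val v) y -> exists v', y = Val v' /\ Pval m v v'.
Proof.
  intros H; destruct (Ptm_cases _ _ _ H) as [[a0 [Hg _]]|Hc].
  - exfalso; eapply cstep_val; eapply gd1_cstep; eauto.
  - destruct y; simpl in Hc; try contradiction; eauto.
Qed.
Lemma Ptm_blame_fwd m l y : Ptm m (Blame l) y -> y = Blame l.
Proof.
  intros H; destruct (Ptm_cases _ _ _ H) as [[a0 [Hg _]]|Hc].
  - exfalso; eapply cstep_blame; eapply gd1_cstep; eauto.
  - destruct y; simpl in Hc; try contradiction; subst; auto.
Qed.
Lemma Ptm_val_bwd x v' : Ptm 0 x (Val v') -> exists v, csteps x (Val v) /\ Pval 0 v v'.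
Proof.
  intros H; destruct (Ptm_unstep _ _ H) as [a1 [Hs Hc]].
  destruct a1; simpl in Hc; try contradiction; eauto.
Qed.
Lemma Ptm_blame_bwd x l : Ptm 0 x (Blame l) -> csteps x (Blame l).
Proof.
  intros H; destruct (Ptm_unstep _ _ H) as [a1 [Hs Hc]].
  destruct a1; simpl in Hc; try contradiction; subst; auto.
Qed.

Lemma Plist_app m l1 l1' l2 l2' : Plist m l1 l1' -> Plist m l2 l2' -> Plist m (l1 ++ l2) (l1' ++ l2').
Proof. induction 1; simpl; intros; auto; constructor; auto. Qed.

Lemma Plist_vals m vs vs' : Forall2 (Pval m) vs vs' -> Plist m (map Val vs) (map Val vs').
Proof. induction 1; simpl; constructor; auto; constructor; auto. Qed.

Lemma Plist_split_fwd m vs e es bs : Plist m (map Val vs ++ e :: es) bs ->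
  exists vs' b bs2, bs = map Val vs' ++ b :: bs2 /\ Forall2 (Pval m) vs vs' /\ Ptm m e b /\ Plist m es bs2.
Proof.
  revert bs; induction vs as [|v vs IH]; simpl; intros bs H; inversion H; subst.
  - exists [], b, l'; simpl; auto.
  - match goal with Hh : Ptm _ (Val _) _ |- _ => destruct (Ptm_val_fwd _ _ _ Hh) as [v' [-> ?]] end.
    match goal with Hh : Plist _ (map Val _ ++ _) _ |- _ => destruct (IH _ Hh) as [vs' [b' [bs2 [-> [? [? ?]]]]]] end.
    exists (v' :: vs'), b', bs2; simpl; auto.
Qed.

Lemma Plist_consts m (ks : list (sK Sg)) l : Plist m (map (const Sg) ks) l -> l = map (const Sg) ks.
Proof.
  revert l; induction ks; simpl; intros l H; inversion H; subst; auto.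
  unfold const in *. match goal with Hh : Ptm _ (Val _) _ |- _ => destruct (Ptm_val_fwd _ _ _ Hh) as [v' [-> Hv]] end.
  inversion Hv; subst.
  f_equal; auto.
Qed.

Lemma Plist_split_bwd m xs vs' b bs : Plist m xs (map Val vs' ++ b :: bs) ->
  exists xs1 x xs2, xs = xs1 ++ x :: xs2 /\ Plist m xs1 (map Val vs') /\ Ptm m x b /\ Plist m xs2 bs.
Proof.
  revert xs; induction vs' as [|v vs' IH]; simpl; intros xs H; inversion H; subst.
  - exists [], a, l; simpl; repeat split; auto; constructor.
  - match goal with Hh : Plist _ _ (map Val _ ++ _) |- _ => destruct (IH _ Hh) as [xs1 [x [xs2 [-> [? [? ?]]]]]] end.
    exists (a :: xs1), x, xs2; simpl; repeat split; auto; constructor; auto.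
Qed.

Lemma Plist_vals_bwd xs vs' : Plist 0 xs (map Val vs') -> forall o pre rest,
  exists vs, csteps (Op o (map Val pre ++ xs ++ rest)) (Op o (map Val pre ++ map Val vs ++ rest)) /\
    Forall2 (Pval 0) vs vs'.
Proof.
  revert xs; induction vs' as [|v' vs' IH]; simpl; intros xs H o pre rest; inversion H; subst.
  - exists []; simpl; split; [apply csteps_refl | constructor].
  - match goal with Hh : Ptm _ _ (Val _) |- _ => destruct (Ptm_val_bwd _ _ Hh) as [v [Hs Hv]] end.
    match goal with Hh : Plist _ _ (map Val _) |- _ => destruct (IH _ Hh o (pre ++ [v]) rest) as [vs [Hs2 HF]] end.
    exists (v :: vs); split; [|constructor; auto].
    eapply csteps_trans; [simpl; apply cs_Op; exact Hs|].
    rewrite map_app in Hs2; simpl in Hs2. rewrite <- !app_assoc in Hs2. simpl in Hs2. exact Hs2.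
Qed.

Lemma Forall2_consts m vs (ks : list (sK Sg)) : Forall2 (Pval m) vs (map (@VConst Sg) ks) -> vs = map (@VConst Sg) ks.
Proof.
  revert vs; induction ks; simpl; intros vs H; inversion H; subst; auto.
  match goal with Hh : Pval _ _ _ |- _ => inversion Hh; subst end; f_equal; auto.
Qed.


Lemma reach_App x1 x2 v1 v2 : csteps x1 (Val v1) -> csteps x2 (Val v2) -> csteps (App x1 x2) (App (Val v1) (Val v2)).
Proof. intros; eapply csteps_trans; [apply cs_App1; eauto | apply cs_App2; eauto]. Qed.

Ltac ptac := repeat (first [ assumption | apply P_Val | apply P_App | apply P_Var | apply P_TApp | apply P_Wait
  | apply P_Active | apply P_Blame | apply PV_Abs | apply PV_TAbs | apply PV_Cast | apply PV_Const
  | apply PT_Fun | apply PT_All | apply PT_Ref | apply PT_Var | apply PT_Base | apply Pty_lift_e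
  | apply Pty_lift_e1 | apply Pval_lift_e | apply Pval_lift_t | apply Ptm_subst_e0 | apply Ptm_subst_t0 ]).

Ltac dfwd := repeat match goal with
   | H : _ /\ _ |- _ => destruct H
   | H : Ptm _ (Val _) _ |- _ => let v' := fresh "v'" in let Hv := fresh "Hv" in
        destruct (Ptm_val_fwd _ _ _ H) as [v' [-> Hv]]; clear H
   | H : Ptm _ (Blame _) _ |- _ => apply Ptm_blame_fwd in H; subst
   | H : Pval _ (VAbs _ _) _ |- _ => inversion H; subst; clear H
   | H : Pval _ (VTAbs _) _ |- _ => inversion H; subst; clear H
   | H : Pval _ (VCast _ _ _) _ |- _ => inversion H; subst; clear H
   | H : Pval _ (VConst _) _ |- _ => inversion H; subst; clear H
   | H : Pty _ (TFun _ _) _ |- _ => inversion H; subst; clear H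
   | H : Pty _ (TAll _) _ |- _ => inversion H; subst; clear H
   | H : Pty _ (TBase _) _ |- _ => inversion H; subst; clear H
   | H : Pty _ (TRef _ _) _ |- _ => inversion H; subst; clear H
   end.

Ltac stepcase := match goal with
  | Hg : gd1 Sg 0 ?a ?a0, HP0 : Ptm 0 ?a0 ?b |- exists b', _ /\ Ptm 0 ?A b' =>
      exists b; split; [apply csteps_refl|]; replace A with a0; [exact HP0|];
      eapply cstep_det; [exact Hneq | eapply gd1_cstep; exact Hg | eauto with cs]
  end.

Ltac useIH := match goal with IH : forall b, Ptm 0 ?x b -> _, Hh : Ptm 0 ?x _ |- _ =>
   destruct (IH _ Hh) as [b' [? ?]] end.

Lemma fwd a a' : cstep a a' -> forall b, Ptm 0 a b -> exists b', csteps b b' /\ Ptm 0 a' b'.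
Proof.
  induction 1; intros b HP; destruct (Ptm_cases _ _ _ HP) as [[a0 [Hg HP0]]|Hc]; try solve [stepcase];
    clear HP.
  - destruct H; destruct b; simpl in Hc; try contradiction; try (unfold ttrue, tfalse in * ); dfwd; subst.
    + match goal with Hh : Plist _ (map (const Sg) _) _ |- _ => apply Plist_consts in Hh; subst end. eexists; split; [apply csteps_one; apply CS_Red; constructor; eauto|].
      apply (proj2 (proj2 (P_refl Sg))).
    + eexists; split; [apply csteps_one; apply CS_Red; constructor|]. ptac.
    + eexists; split; [apply csteps_one; apply CS_Red; constructor|]. ptac.
    + eexists; split; [apply csteps_one; apply CS_Red; constructor|]. ptac.
    + eexists; split; [apply csteps_one; apply CS_Red; constructor|]. ptac.
    + eexists; split; [apply csteps_one; apply CS_Red; constructor|]. ptac.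
    + eexists; split; [apply csteps_one; apply CS_Red; constructor|]. ptac.
    + eexists; split; [apply csteps_one; apply CS_Red; constructor|].
      * match goal with Hp : Pty _ T1 _ |- _ => destruct Hp; simpl in *; auto end.
      * ptac.
    + eexists; split; [apply csteps_one; apply CS_Red; constructor|]. ptac.
    + unfold const in *; dfwd; eexists; split; [apply csteps_one; apply CS_Red; constructor|]. ptac.
    + unfold const in *; dfwd; eexists; split; [apply csteps_one; apply CS_Red; constructor|]. ptac.
  - destruct b; simpl in Hc; try contradiction; dfwd; subst; useIH; eexists; split;
    [first [apply cs_App1; eassumption | apply cs_App2; eassumption | apply cs_TApp; eassumption | apply cs_Wait; eassumption | apply cs_Active; eassumption] | ptac].
  - destruct b; simpl in Hc; try contradiction; dfwd; subst; useIH; eexists; split;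
    [first [apply cs_App1; eassumption | apply cs_App2; eassumption | apply cs_TApp; eassumption | apply cs_Wait; eassumption | apply cs_Active; eassumption] | ptac].
  - destruct b; simpl in Hc; try contradiction; dfwd; subst; useIH; eexists; split;
    [first [apply cs_App1; eassumption | apply cs_App2; eassumption | apply cs_TApp; eassumption | apply cs_Wait; eassumption | apply cs_Active; eassumption] | ptac].
  - destruct b; simpl in Hc; try contradiction; dfwd; subst; useIH; eexists; split;
    [first [apply cs_App1; eassumption | apply cs_App2; eassumption | apply cs_TApp; eassumption | apply cs_Wait; eassumption | apply cs_Active; eassumption] | ptac].
  - destruct b; simpl in Hc; try contradiction; dfwd; subst; useIH; eexists; split;
    [first [apply cs_App1; eassumption | apply cs_App2; eassumption | apply cs_TApp; eassumption | apply cs_Wait; eassumption | apply cs_Active; eassumption] | ptac].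
  - destruct b; simpl in Hc; try contradiction; dfwd. subst.
    match goal with Hh : Plist _ _ _ |- _ => destruct (Plist_split_fwd _ _ _ _ _ Hh) as [vs' [b [bs2 [-> [? [? ?]]]]]] end.
    useIH. exists (Op o0 (map Val vs' ++ b' :: bs2)); split; [apply cs_Op; auto|].
    apply P_Op. apply Plist_app; [apply Plist_vals; auto | constructor; auto].
  - destruct b; simpl in Hc; try contradiction; dfwd. eexists; split; [apply csteps_one; apply CS_BApp1|]; ptac.
  - destruct b; simpl in Hc; try contradiction; dfwd. eexists; split; [apply csteps_one; apply CS_BApp2|]; ptac.
  - destruct b; simpl in Hc; try contradiction; dfwd. eexists; split; [apply csteps_one; apply CS_BTApp|]; ptac.
  - destruct b; simpl in Hc; try contradiction; dfwd. eexists; split; [apply csteps_one; apply CS_BWait|]; ptac.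
  - destruct b; simpl in Hc; try contradiction; dfwd. eexists; split; [apply csteps_one; apply CS_BActive|]; ptac.
  - destruct b; simpl in Hc; try contradiction; dfwd. subst.
    match goal with Hh : Plist _ _ _ |- _ => destruct (Plist_split_fwd _ _ _ _ _ Hh) as [vs' [b [bs2 [-> [? [? ?]]]]]] end.
    dfwd.
    eexists; split; [apply csteps_one; apply CS_BOp|]; ptac.
Qed.

Ltac dbwd := repeat match goal with
   | H : _ /\ _ |- _ => destruct H
   | H : Ptm 0 _ (Val _) |- _ => let v := fresh "v" in let Hs := fresh "Hs" in let Hv := fresh "Hv" in
        destruct (Ptm_val_bwd _ _ H) as [v [Hs Hv]]; clear H
   | H : Ptm 0 _ (Blame _) |- _ => apply Ptm_blame_bwd in H
   | H : Pval _ _ (VAbs _ _) |- _ => inversion H; subst; clear H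
   | H : Pval _ _ (VTAbs _) |- _ => inversion H; subst; clear H
   | H : Pval _ _ (VCast _ _ _) |- _ => inversion H; subst; clear H
   | H : Pval _ _ (VConst _) |- _ => inversion H; subst; clear H
   | H : Pty _ _ (TFun _ _) |- _ => inversion H; subst; clear H
   | H : Pty _ _ (TAll _) |- _ => inversion H; subst; clear H
   | H : Pty _ _ (TBase _) |- _ => inversion H; subst; clear H
   | H : Pty _ _ (TRef _ _) |- _ => inversion H; subst; clear H
   end.

Ltac useIHb := match goal with IH : forall a, Ptm 0 a ?y -> _, Hh : Ptm 0 _ ?y |- _ =>
   let a' := fresh "a'" in destruct (IH _ Hh) as [a' [? ?]] end.

Ltac chain := repeat (eapply csteps_trans; [ first [ eassumption
   | apply cs_App1; eassumption | apply cs_App2; eassumption | apply cs_TApp; eassumption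
   | apply cs_Wait; eassumption | apply cs_Active; eassumption | apply cs_Op; eassumption ] | ]).

Lemma bwd b b' : cstep b b' -> forall a, Ptm 0 a b -> exists a', csteps a a' /\ Ptm 0 a' b'.
Proof.
  induction 1; intros a HP; destruct (Ptm_unstep _ _ HP) as [a1 [Hs1 Hc]]; clear HP.
  - destruct H; destruct a1; simpl in Hc; try contradiction; try (unfold ttrue, tfalse in * ); dbwd; subst.
    +
      replace (map (const Sg) ks) with (map Val (map (@VConst Sg) ks)) in * by (rewrite map_map; reflexivity).
      destruct (Plist_vals_bwd _ _ H1 o [] []) as [vs [Hs2 HF]].
      apply Forall2_consts in HF; subst. rewrite !app_nil_r in Hs2; simpl in Hs2.
      exists (const Sg k); split; [|apply (proj2 (proj2 (P_refl Sg)))].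
      eapply csteps_trans; [exact Hs1|]. eapply csteps_trans; [exact Hs2|].
      apply csteps_one; apply CS_Red. rewrite map_map. constructor; auto.
    + eexists; split; [chain; apply csteps_one; apply CS_Red; constructor | ptac].
    + eexists; split; [chain; apply csteps_one; apply CS_Red; constructor | ptac].
    + eexists; split; [chain; apply csteps_one; apply CS_Red; constructor | ptac].
    + eexists; split; [chain; apply csteps_one; apply CS_Red; constructor | ptac].
    + eexists; split; [chain; apply csteps_one; apply CS_Red; constructor | ptac].
    + eexists; split; [chain; apply csteps_one; apply CS_Red; constructor | ptac].
    + eexists; split; [chain; apply csteps_one; apply CS_Red; constructor | ptac].
      all: match goal with Hp : Pty _ ?A ?B, Hn : ~ is_refinement Sg ?B |- ~ is_refinement Sg ?A => destruct Hp; simpl in *; auto end.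
    + eexists; split; [chain; apply csteps_one; apply CS_Red; constructor | ptac].
    + unfold const in *; dbwd. eexists; split; [chain; apply csteps_one; apply CS_Red; constructor | ptac].
    + unfold const in *; dbwd. eexists; split; [chain; apply csteps_one; apply CS_Red; constructor | ptac].
  - destruct a1; simpl in Hc; try contradiction; dbwd; subst; useIHb; eexists; split; [chain; apply csteps_refl | ptac].
  - destruct a1; simpl in Hc; try contradiction; dbwd; subst; useIHb; eexists; split; [chain; apply csteps_refl | ptac].
  - destruct a1; simpl in Hc; try contradiction; dbwd; subst; useIHb; eexists; split; [chain; apply csteps_refl | ptac].
  - destruct a1; simpl in Hc; try contradiction; dbwd; subst; useIHb; eexists; split; [chain; apply csteps_refl | ptac].
  - destruct a1; simpl in Hc; try contradiction; dbwd; subst; useIHb; eexists; split; [chain; apply csteps_refl | ptac].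
  - destruct a1; simpl in Hc; try contradiction; dbwd; subst.
    match goal with Hh : Plist _ _ _ |- _ => destruct (Plist_split_bwd _ _ _ _ _ Hh) as [xs1 [x [xs2 [-> [? [? ?]]]]]] end.
    match goal with Hh : Plist _ xs1 _ |- _ => destruct (Plist_vals_bwd _ _ Hh o [] (x :: xs2)) as [vs0 [Hs2 HF]] end.
    simpl in Hs2. useIHb.
    exists (Op o (map Val vs0 ++ a' :: xs2)); split.
    + eapply csteps_trans; [exact Hs1|]. eapply csteps_trans; [exact Hs2|]. apply cs_Op; auto.
    + apply P_Op. apply Plist_app; [apply Plist_vals; auto | constructor; auto].
  - destruct a1; simpl in Hc; try contradiction; dbwd; subst; eexists; split; [chain; apply csteps_one; apply CS_BApp1 | ptac].
  - destruct a1; simpl in Hc; try contradiction; dbwd; subst; eexists; split; [chain; apply csteps_one; apply CS_BApp2 | ptac].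
  - destruct a1; simpl in Hc; try contradiction; dbwd; subst; eexists; split; [chain; apply csteps_one; apply CS_BTApp | ptac].
  - destruct a1; simpl in Hc; try contradiction; dbwd; subst; eexists; split; [chain; apply csteps_one; apply CS_BWait | ptac].
  - destruct a1; simpl in Hc; try contradiction; dbwd; subst; eexists; split; [chain; apply csteps_one; apply CS_BActive | ptac].
  - destruct a1; simpl in Hc; try contradiction; dbwd; subst.
    match goal with Hh : Plist _ _ _ |- _ => destruct (Plist_split_bwd _ _ _ _ _ Hh) as [xs1 [x [xs2 [-> [? [? ?]]]]]] end.
    match goal with Hh : Plist _ xs1 _ |- _ => destruct (Plist_vals_bwd _ _ Hh o [] (x :: xs2)) as [vs0 [Hs2 HF]] end.
    simpl in Hs2. dbwd.
    exists (Blame l); split; [|constructor].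
    eapply csteps_trans; [exact Hs1|]. eapply csteps_trans; [exact Hs2|].
    eapply csteps_trans; [apply cs_Op; eassumption|]. apply csteps_one; apply CS_BOp.
Qed.

Lemma coterm_fwd a b : csteps a (ttrue Sg) -> Ptm 0 a b -> csteps b (ttrue Sg).
Proof.
  intros H; remember (ttrue Sg) as t; revert b; induction H; intros b HP; subst.
  - unfold ttrue, const in *. destruct (Ptm_val_fwd _ _ _ HP) as [v' [-> Hv]]. inversion Hv; subst; apply csteps_refl.
  - destruct (fwd _ _ H _ HP) as [b' [? ?]]. eapply csteps_trans; eauto.
Qed.

Lemma coterm_bwd a b : csteps b (ttrue Sg) -> Ptm 0 a b -> csteps a (ttrue Sg).
Proof.
  intros H; remember (ttrue Sg) as t; revert a; induction H; intros a HP; subst.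
  - unfold ttrue, const in *. destruct (Ptm_val_bwd _ _ HP) as [v [Hs Hv]]. inversion Hv; subst; auto.
  - destruct (bwd _ _ H _ HP) as [a' [? ?]]. eapply csteps_trans; eauto.
Qed.
End Sim.

Section Conn.
Context (Sg : sig).
Hypothesis Hneq : strue Sg <> sfalse Sg.
Notation tm := (tm Sg).
Notation ty := (ty Sg).
Notation val := (val Sg).
Notation cstep := (cstep Sg).
Notation csteps := (csteps Sg).
Notation step := (step Sg).
Notation multistep := (multistep Sg).
Notation plug := (plug Sg).

Fixpoint ecomp (F E : ectx Sg) : ectx Sg :=
  match F with
  | EHole _ => E
  | EOp _ o vs F' es => EOp Sg o vs (ecomp F' E) es
  | EApp1 _ F' e => EApp1 Sg (ecomp F' E) e
  | EApp2 _ v F' => EApp2 Sg v (ecomp F' E)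
  | ETApp _ F' T => ETApp Sg (ecomp F' E) T
  | EWait _ T e F' l => EWait Sg T e (ecomp F' E) l
  | EActive _ T e F' v l => EActive Sg T e (ecomp F' E) v l
  end.

Lemma plug_ecomp F E e : plug (ecomp F E) e = plug F (plug E e).
Proof. induction F; simpl; congruence. Qed.

Lemma ecomp_hole F E : ecomp F E = EHole Sg -> E = EHole Sg.
Proof. destruct F; simpl; intros H; try discriminate; auto. Qed.

Lemma step_frame F e e' : step e e' -> exists z, step (plug F e) z.
Proof.
  destruct 1.
  - exists (plug F (plug E e2)). rewrite <- !plug_ecomp. constructor; auto.
  - exists (Blame l). rewrite <- plug_ecomp. constructor. intros Hc. apply ecomp_hole in Hc; auto.
Qed.

Lemma step_frame_blame F l : F <> EHole Sg -> step (plug F (Blame l)) (Blame l).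
Proof. intros; constructor; auto. Qed.

Lemma plug_cstep E r r' : red Sg r r' -> cstep (plug E r) (plug E r').
Proof. induction E; simpl; intros;
  [apply CS_Red | apply CS_Op | apply CS_App1 | apply CS_App2 | apply CS_TApp | apply CS_Wait | apply CS_Active]; auto. Qed.

Lemma plug_blame_csteps E l : csteps (plug E (Blame l)) (Blame l).
Proof.
  induction E; simpl.
  - apply csteps_refl.
  - eapply csteps_trans; [apply cs_Op; eauto|]. apply csteps_one; apply CS_BOp.
  - eapply csteps_trans; [apply cs_App1; eauto|]. apply csteps_one; apply CS_BApp1.
  - eapply csteps_trans; [apply cs_App2; eauto|]. apply csteps_one; apply CS_BApp2.
  - eapply csteps_trans; [apply cs_TApp; eauto|]. apply csteps_one; apply CS_BTApp.
  - eapply csteps_trans; [apply cs_Wait; eauto|]. apply csteps_one; apply CS_BWait.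
  - eapply csteps_trans; [apply cs_Active; eauto|]. apply csteps_one; apply CS_BActive.
Qed.

Lemma step_csteps x y : step x y -> csteps x y.
Proof.
  destruct 1.
  - apply csteps_one; apply plug_cstep; auto.
  - apply plug_blame_csteps.
Qed.

Lemma multistep_csteps x y : multistep x y -> csteps x y.
Proof. induction 1; [apply csteps_refl|]. eapply csteps_trans; eauto using step_csteps. Qed.

Inductive bpi : tm -> label -> Prop :=
 | BP_Here l : bpi (Blame l) l
 | BP_App1 e1 e2 l : bpi e1 l -> bpi (App e1 e2) l
 | BP_App2 v e2 l : bpi e2 l -> bpi (App (Val v) e2) l
 | BP_TApp e T l : bpi e l -> bpi (TApp e T) l
 | BP_Wait T e1 e2 l' l : bpi e2 l -> bpi (Wait T e1 e2 l') l
 | BP_Active T e1 e2 v l' l : bpi e2 l -> bpi (Active T e1 e2 v l') l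
 | BP_Op o vs e es l : bpi e l -> bpi (Op o (map Val vs ++ e :: es)) l.
Local Hint Constructors bpi : bpdb.

Lemma bpi_notval y l : bpi y l -> notval Sg y.
Proof. destruct 1; intros w Hw; discriminate. Qed.

Lemma cstep_cases x y : cstep x y -> (exists E r r', x = plug E r /\ y = plug E r' /\ red Sg r r') \/ (exists l, bpi y l).
Proof.
  induction 1;
  try solve [right; exists l; constructor].
  - left; exists (EHole Sg), e, e'; auto.
  - destruct IHcstep as [[E [r [r' [-> [-> ?]]]]]|[lb ?]].
    + left; exists (EApp1 Sg E e2), r, r'; auto.
    + right; exists lb; auto with bpdb.
  - destruct IHcstep as [[E [r [r' [-> [-> ?]]]]]|[lb ?]].
    + left; exists (EApp2 Sg v E), r, r'; auto.
    + right; exists lb; auto with bpdb.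
  - destruct IHcstep as [[E [r [r' [-> [-> ?]]]]]|[lb ?]].
    + left; exists (ETApp Sg E T), r, r'; auto.
    + right; exists lb; auto with bpdb.
  - destruct IHcstep as [[E [r [r' [-> [-> ?]]]]]|[lb ?]].
    + left; exists (EWait Sg T e1 E l), r, r'; auto.
    + right; exists lb; auto with bpdb.
  - destruct IHcstep as [[E [r [r' [-> [-> ?]]]]]|[lb ?]].
    + left; exists (EActive Sg T e1 E v l), r, r'; auto.
    + right; exists lb; auto with bpdb.
  - destruct IHcstep as [[E [r [r' [-> [-> ?]]]]]|[lb ?]].
    + left; exists (EOp Sg o vs E es), r, r'; auto.
    + right; exists lb; auto with bpdb.
Qed.

Ltac redcontra := exfalso; match goal with
   | Hr : red Sg (App _ _) _ |- _ => destruct (red_App_inv _ _ _ _ Hr) as [[? ?] [? ?]]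
   | Hr : red Sg (TApp _ _) _ |- _ => destruct (red_TApp_inv _ _ _ _ Hr) as [? ?]
   | Hr : red Sg (Wait _ _ _ _) _ |- _ => destruct (red_Wait_inv _ _ _ _ _ _ Hr) as [? ?]
   | Hr : red Sg (Active _ _ _ _ _) _ |- _ => destruct (red_Active_inv _ _ _ _ _ _ _ Hr) as [? ?]
   | Hr : red Sg (Op _ _) _ |- _ => let ks := fresh "ks" in let Hks := fresh "Hks" in
       destruct (red_Op_inv _ _ _ _ Hr) as [ks Hks]; symmetry in Hks;
       destruct (map_const_dec _ _ _ _ _ Hks) as [? ?]; unfold const in *
   end; subst; match goal with Hb : bpi (Val _) _ |- _ => eapply bpi_notval; [exact Hb | reflexivity] end.

Lemma bp_cstep x l z : bpi x l -> cstep x z -> bpi z l.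
Proof.
  intros Hb; revert z; induction Hb; intros z H; inversion H; subst;
    try solve [redcontra];
    try solve [exfalso; eapply cstep_blame; eauto];
    try solve [match goal with Hb : bpi (Val _) _ |- _ => exfalso; eapply bpi_notval; [exact Hb | reflexivity] end];
    try solve [match goal with Hc : cstep (Val _) _ |- _ => exfalso; eapply cstep_val; exact Hc end];
    try solve [match goal with Hc : bpi (Blame _) _ |- _ => inversion Hc; subst; constructor end];
    try solve [constructor; auto].
  - match goal with Hq : map Val _ ++ _ :: _ = map Val _ ++ _ :: _ |- _ =>
      destruct (list_dec _ _ _ _ _ _ _ Hq) as [? [? ?]] end;
      [eapply cstep_notval; eauto | eapply bpi_notval; eauto | subst].
    apply BP_Op; auto.
  - match goal with Hq : map Val _ ++ _ :: _ = map Val _ ++ _ :: _ |- _ =>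
      destruct (list_dec _ _ _ _ _ _ _ Hq) as [? [? ?]] end;
      [intros ? ?; discriminate | eapply bpi_notval; eauto | subst].
    inversion Hb; subst; constructor.
Qed.

Lemma bp_csteps_val y v l : csteps y (Val v) -> bpi y l -> False.
Proof.
  intros H; remember (Val v) as t; induction H; intros Hb; subst.
  - eapply bpi_notval; eauto.
  - apply IHclos_refl_trans_1n; auto. eapply bp_cstep; eauto.
Qed.

Lemma csteps_multistep x v : csteps x (Val v) -> multistep x (Val v).
Proof.
  intros H; remember (Val v) as t; induction H; subst; [constructor|].
  destruct (cstep_cases _ _ H) as [[E [r [r' [-> [-> ?]]]]]|[l Hb]].
  - econstructor; [constructor; eauto | apply IHclos_refl_trans_1n; auto].
  - exfalso; eapply bp_csteps_val; eauto.
Qed.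
End Conn.

Scheme typing_mut := Induction for typing Sort Prop
with args_mut := Induction for args_typed Sort Prop.

Section Main.
Context (Sg : sig).
Hypothesis Hneq : strue Sg <> sfalse Sg.
Notation tm := (tm Sg).
Notation ty := (ty Sg).
Notation val := (val Sg).
Notation cstep := (cstep Sg).
Notation csteps := (csteps Sg).
Notation step := (step Sg).
Notation multistep := (multistep Sg).

Fixpoint satc (T : ty) (w : val) : Prop :=
  match T with
  | TBase _ => True
  | TRef T' p => satc T' w /\ csteps (subst_e_tm Sg 0 (Val w) p) (ttrue Sg)
  | _ => False
  end.

Lemma csteps_val_inv v y : csteps (Val v) y -> y = Val v.
Proof. inversion 1; subst; auto. exfalso; eapply cstep_val; eauto. Qed.
Lemma csteps_blame_val l v : csteps (Blame l) (Val v) -> False.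
Proof. inversion 1; subst. eapply cstep_blame; eauto. Qed.

Lemma first_step x y v : cstep x y -> csteps x (Val v) -> csteps y (Val v).
Proof.
  intros H1 H2; inversion H2; subst.
  - exfalso; eapply cstep_val; eauto.
  - rewrite (cstep_det Sg Hneq _ _ _ H1 H); auto.
Qed.

Lemma wait_dec T p x l u : csteps (Wait T p x l) (Val u) ->
  exists w, csteps x (Val w) /\ csteps (Wait T p (Val w) l) (Val u).
Proof.
  intros H; remember (Wait T p x l) as t; remember (Val u) as z; revert x Heqt; induction H; intros x0 Heq; subst.
  - discriminate.
  - inversion H; subst.
    + match goal with Hr : red Sg _ _ |- _ => destruct (red_Wait_inv _ _ _ _ _ _ Hr) as [w ->] end. exists w; split; [apply csteps_refl|].
      econstructor; eauto.
    + destruct (IHclos_refl_trans_1n eq_refl _ eq_refl) as [w [? ?]]. exists w; split; auto. econstructor; eauto.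
    + exfalso; eapply csteps_blame_val; eauto.
Qed.

Lemma active_dec T p x v l u : csteps (Active T p x v l) (Val u) ->
  exists w, csteps x (Val w) /\ csteps (Active T p (Val w) v l) (Val u).
Proof.
  intros H; remember (Active T p x v l) as t; remember (Val u) as z; revert x Heqt; induction H; intros x0 Heq; subst.
  - discriminate.
  - inversion H; subst.
    + match goal with Hr : red Sg _ _ |- _ => destruct (red_Active_inv _ _ _ _ _ _ _ Hr) as [w ->] end. exists w; split; [apply csteps_refl|].
      econstructor; eauto.
    + destruct (IHclos_refl_trans_1n eq_refl _ eq_refl) as [w [? ?]]. exists w; split; auto. econstructor; eauto.
    + exfalso; eapply csteps_blame_val; eauto.
Qed.

Lemma cast_inv T : forall b w u l, unref Sg T = TBase b ->
  csteps (App (Val (VCast (TBase b) T l)) (Val w)) (Val u) -> u = w /\ satc T w.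
Proof.
  induction T; simpl; intros b0 w u l Hu Hs; try discriminate.
  - inversion Hu; subst.
    assert (Hc : cstep (App (Val (VCast (TBase b0) (TBase b0) l)) (Val w)) (Val w)) by (apply CS_Red; constructor).
    apply (first_step _ _ _ Hc) in Hs. apply csteps_val_inv in Hs. inversion Hs; auto.
  - assert (Hc : cstep (App (Val (VCast (TBase b0) (TRef T e) l)) (Val w))
                   (Wait T e (App (Val (VCast (TBase b0) T l)) (Val w)) l))
      by (apply CS_Red; constructor; simpl; auto).
    apply (first_step _ _ _ Hc) in Hs.
    destruct (wait_dec _ _ _ _ _ Hs) as [w' [Hs1 Hs2]].
    destruct (IHT _ _ _ _ Hu Hs1) as [-> Hsat].
    assert (Hc2 : cstep (Wait T e (Val w) l) (Active T e (subst_e_tm Sg 0 (Val w) e) w l))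
      by (apply CS_Red; constructor).
    apply (first_step _ _ _ Hc2) in Hs2.
    destruct (active_dec _ _ _ _ _ _ Hs2) as [u' [Hs3 Hs4]].
    inversion Hs4; subst. inversion H; subst.
    + inversion H1; subst.
      * apply csteps_val_inv in H0. inversion H0; subst. split; auto.
      * exfalso; eapply csteps_blame_val; eauto.
    + exfalso; eapply cstep_val; eauto.
Qed.

Lemma cast_fwd T : forall b w l, unref Sg T = TBase b -> satc T w ->
  csteps (App (Val (VCast (TBase b) T l)) (Val w)) (Val w).
Proof.
  induction T; simpl; intros b0 w l Hu Hs; try discriminate; try contradiction.
  - inversion Hu; subst. apply csteps_one; apply CS_Red; constructor.
  - destruct Hs as [Hs1 Hs2].
    eapply csteps_trans; [apply csteps_one; apply CS_Red; apply R_PreCheck; simpl; auto|].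
    eapply csteps_trans; [apply cs_Wait; eapply IHT; eauto|].
    eapply csteps_trans; [apply csteps_one; apply CS_Red; constructor|].
    eapply csteps_trans; [apply cs_Active; exact Hs2|].
    apply csteps_one; apply CS_Red; constructor.
Qed.

Lemma Pty_unref m A B : Pty Sg m A B -> Pty Sg m (unref Sg A) (unref Sg B).
Proof. induction 1; simpl; auto; econstructor; eauto. Qed.

Lemma Pty_sat m A B w : Pty Sg m A B -> m = 0 -> (satc A w <-> satc B w).
Proof.
  induction 1; intros Hm; subst; simpl; try tauto.
  specialize (IHPty eq_refl).
  assert (HP : Ptm Sg 0 (subst_e_tm Sg 0 (Val w) e) (subst_e_tm Sg 0 (Val w) e'))
    by (apply Ptm_subst_e0; auto; apply (proj2 (proj2 (P_refl Sg)))).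
  split; intros [? ?]; split; try tauto.
  - eapply coterm_fwd; eauto.
  - eapply coterm_bwd; eauto.
Qed.

Lemma csteps_Ptm x y : csteps x y -> Ptm Sg 0 x y.
Proof.
  induction 1; [apply (proj2 (proj2 (P_refl Sg)))|].
  eapply P_Step; eauto. apply cstep_gd; auto.
Qed.

Lemma conv1_Pty A B : conv1 Sg A B -> Pty Sg 0 A B.
Proof.
  intros [T [e1 [e2 [-> [-> Hs]]]]].
  apply Pty_subst_e0; [apply (proj1 (P_refl Sg)) | apply csteps_Ptm, step_csteps; auto].
Qed.

Section WithSig.
Context (Sig : tysig Sg).
Hypothesis FH : FH_assumptions Sg Sig.

Definition canon (v : val) (T : ty) : Prop :=
  match v with
  | VConst k => unref Sg T = TBase (kbase Sg k) /\ satc T (VConst k)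
  | VAbs _ _ => exists X Y, unref Sg T = TFun X Y
  | VTAbs _ => exists X, unref Sg T = TAll X
  | VCast A B l => (exists X Y, unref Sg T = TFun X Y) /\ compat Sg A B /\ wf_ty Sg Sig [] A
  end.

Lemma canon_Pty_fwd v A B : Pty Sg 0 A B -> canon v A -> canon v B.
Proof.
  intros HP Hc. pose proof (Pty_unref _ _ _ HP) as HU.
  destruct v; simpl in *.
  - destruct Hc as [Hu Hs]. rewrite Hu in HU. inversion HU; subst. split; [congruence|].
    apply (proj1 (Pty_sat _ _ _ _ HP eq_refl)); auto.
  - destruct Hc as [X [Y Hu]]. rewrite Hu in HU. inversion HU; subst; eauto.
  - destruct Hc as [X Hu]. rewrite Hu in HU. inversion HU; subst; eauto.
  - destruct Hc as [[X [Y Hu]] ?]. rewrite Hu in HU. inversion HU; subst; eauto.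
Qed.

Lemma canon_Pty_bwd v A B : Pty Sg 0 A B -> canon v B -> canon v A.
Proof.
  intros HP Hc. pose proof (Pty_unref _ _ _ HP) as HU.
  destruct v; simpl in *.
  - destruct Hc as [Hu Hs]. rewrite Hu in HU. inversion HU; subst. split; [congruence|].
    apply (proj2 (Pty_sat _ _ _ _ HP eq_refl)); auto.
  - destruct Hc as [X [Y Hu]]. rewrite Hu in HU. inversion HU; subst; eauto.
  - destruct Hc as [X Hu]. rewrite Hu in HU. inversion HU; subst; eauto.
  - destruct Hc as [[X [Y Hu]] ?]. rewrite Hu in HU. inversion HU; subst; eauto.
Qed.

Lemma canon_equiv v A B : Defs.equiv Sg A B -> canon v A -> canon v B.
Proof.
  induction 1.
  - destruct H as [H|H]; intros; [eapply canon_Pty_fwd | eapply canon_Pty_bwd]; eauto; apply conv1_Pty; auto.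
  - auto.
Qed.

Lemma canon_typing G e T : typing Sg Sig G e T -> G = [] -> forall v, e = Val v -> canon v T.
Proof.
  induction 1; intros HG v0 He; try discriminate; inversion He; subst; simpl.
  - destruct FH as [_ [_ [_ [_ [Hk _]]]]]. destruct (Hk k) as [Hu [_ Hm]].
    split; auto.
    specialize (Hm 0). apply multistep_csteps in Hm.
    apply (cast_inv _ _ _ _ _ Hu) in Hm. tauto.
  - eauto.
  - eauto.
  - eauto.
  - eapply canon_equiv; eauto.
  - specialize (IHtyping eq_refl _ eq_refl). destruct v0; simpl in *; auto; tauto.
  - specialize (IHtyping eq_refl _ eq_refl). destruct v0; simpl in *; auto.
    destruct IHtyping; split; auto. split; auto. apply multistep_csteps; auto.
Qed.

End WithSig.
End Main.

Section Prog.
Context (Sg : sig) (Sig : tysig Sg).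
Hypothesis FH : FH_assumptions Sg Sig.
Notation tm := (tm Sg).
Notation ty := (ty Sg).
Notation val := (val Sg).

Definition prog (e : tm) := (exists e', step Sg e e') \/ is_value Sg e \/ (exists l : label, e = Blame l).

Lemma Hneq : strue Sg <> sfalse Sg.
Proof. destruct FH as [_ [_ [H _]]]; auto. Qed.

Lemma red_step r r' : red Sg r r' -> exists z, step Sg r z.
Proof. intros H; exists r'; apply (S_Ctx Sg (EHole Sg)); auto. Qed.

Lemma unref_subst T : forall k u, unref Sg (subst_e_ty Sg k u T) = subst_e_ty Sg k u (unref Sg T).
Proof. induction T; simpl; auto. Qed.

Lemma is_base_subst T k u : is_base Sg T -> is_base Sg (subst_e_ty Sg k u T).
Proof. intros [b ->]; simpl; eexists; eauto. Qed.

Lemma op_shape_subst T : forall k u, op_shape Sg T -> op_shape Sg (subst_e_ty Sg k u T).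
Proof.
  induction T; simpl; intros k u H; auto; try (destruct H as [? Hb]; discriminate).
  - destruct H; split; auto. rewrite unref_subst. apply is_base_subst; auto.
  - rewrite unref_subst. apply is_base_subst; auto.
Qed.

Lemma args_ok (lb : label) vs : forall T R, args_typed Sg Sig [] T (map Val vs) R -> op_shape Sg T ->
  exists ks, vs = map (@VConst Sg) ks /\ op_args_ok Sg lb T ks.
Proof.
  induction vs as [|v vs IH]; simpl; intros T R Ha Hs.
  - exists []; simpl; auto.
  - inversion Ha; subst. simpl in Hs. destruct Hs as [[b Hb] Hs].
    pose proof (canon_typing Sg Hneq Sig FH _ _ _ H3 eq_refl v eq_refl) as Hc.
    destruct v; simpl in Hc; try (destruct Hc as [[X [Y Hu]] _]; congruence);
      try (destruct Hc as [X [Y Hu]]; congruence); try (destruct Hc as [X Hu]; congruence).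
    destruct Hc as [Hu Hsat].
    destruct (IH _ _ H5) as [ks [-> Hok]].
    + apply op_shape_subst; auto.
    + exists (k :: ks); simpl; split; auto. split; auto.
      split; auto. apply csteps_multistep. rewrite Hu. apply cast_fwd; auto.
Qed.

Lemma prog_split es : Forall prog es -> (exists vs, es = map Val vs) \/
  (exists vs e es', es = map Val vs ++ e :: es' /\ ((exists e', step Sg e e') \/ (exists l, e = Blame l))).
Proof.
  induction 1.
  - left; exists []; auto.
  - destruct H as [[e' He]|[[v ->]|[lb ->]]].
    + right; exists [], x, l; simpl; eauto.
    + destruct IHForall as [[vs ->]|[vs [e [es' [-> Hp]]]]].
      * left; exists (v :: vs); auto.
      * right; exists (v :: vs), e, es'; simpl; auto.
    + right; exists [], (Blame lb), l; simpl; eauto.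
Qed.

Lemma cast_red A B l v : compat Sg A B -> wf_ty Sg Sig [] A -> exists z, red Sg (App (Val (VCast A B l)) (Val v)) z.
Proof.
  intros Hc Hw.
  destruct A as [b|a|A1 A2|A|A e]; [| | | |eexists; apply R_Forget].
  all: destruct B as [b'|a'|B1 B2|B|B e']; try (eexists; apply R_PreCheck; simpl; tauto).
  all: inversion Hc; subst; try (eexists; constructor).
  all: inversion Hw; subst; simpl in *; contradiction.
Qed.

Lemma progress G e T : typing Sg Sig G e T -> G = [] -> prog e.
Proof.
  revert G e T.
  apply (typing_mut Sg Sig (fun G e T _ => G = [] -> prog e)
                           (fun G T es R _ => G = [] -> Forall prog es)); intros; subst; unfold prog.
  - simpl in e. discriminate.
  - right; left; eexists; eauto.
  -
    specialize (H eq_refl). destruct (prog_split _ H) as [[vs ->]|[vs [e1 [es' [-> [[e' He]|[l ->]]]]]]].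
    + destruct FH as [_ [_ [_ [_ [_ Hop]]]]]. destruct (Hop o) as [Hsh Hden].
      destruct (args_ok 0 _ _ _ a Hsh) as [ks [-> Hok]].
      assert (Hlen : length ks = arity Sg (ty_op Sig o)) by (rewrite <- e; rewrite !length_map; auto).
      destruct (Hden 0 ks Hlen) as [Hs _]. destruct (Hs Hok) as [k [Hk _]].
      left. rewrite map_map. apply (red_step _ _ (R_Op Sg o ks k Hk)).
    + left. apply (step_frame Sg (EOp Sg o vs (EHole Sg) es') _ _ He).
    + left. exists (Blame l). apply (step_frame_blame Sg (EOp Sg o vs (EHole Sg) es')). discriminate.
  - right; left; eexists; eauto.
  - right; left; eexists; eauto.
  -
    destruct (H eq_refl) as [[e' He]|[[v1 ->]|[l ->]]].
    + left; apply (step_frame Sg (EApp1 Sg (EHole Sg) e2) _ _ He).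
    + destruct (H0 eq_refl) as [[e' He]|[[v2 ->]|[l ->]]].
      * left; apply (step_frame Sg (EApp2 Sg v1 (EHole Sg)) _ _ He).
      * left. pose proof (canon_typing Sg Hneq Sig FH _ _ _ t eq_refl v1 eq_refl) as Hc.
        destruct v1; simpl in Hc.
        -- destruct Hc as [Hu _]; discriminate.
        -- eapply red_step. constructor.
        -- destruct Hc as [X Hu]; discriminate.
        -- destruct Hc as [_ [Hcp Hw]]. destruct (cast_red _ _ l v2 Hcp Hw) as [z Hz]. eapply red_step; eauto.
      * left; exists (Blame l); apply (step_frame_blame Sg (EApp2 Sg v1 (EHole Sg))); discriminate.
    + left; exists (Blame l); apply (step_frame_blame Sg (EApp1 Sg (EHole Sg) e2)); discriminate.
  - right; left; eexists; eauto.
  -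
    destruct (H eq_refl) as [[e' He]|[[v1 ->]|[l ->]]].
    + left; apply (step_frame Sg (ETApp Sg (EHole Sg) T2) _ _ He).
    + left. pose proof (canon_typing Sg Hneq Sig FH _ _ _ t eq_refl v1 eq_refl) as Hc.
      destruct v1; simpl in Hc.
      * destruct Hc as [Hu _]; discriminate.
      * destruct Hc as [X [Y Hu]]; discriminate.
      * eapply red_step. constructor.
      * destruct Hc as [[X [Y Hu]] _]; discriminate.
    + left; exists (Blame l); apply (step_frame_blame Sg (ETApp Sg (EHole Sg) T2)); discriminate.
  -
    destruct (H eq_refl) as [[e' He]|[[v1 ->]|[l' ->]]].
    + left; apply (step_frame Sg (EWait Sg T1 e1 (EHole Sg) l) _ _ He).
    + left. eapply red_step. constructor.
    + left; exists (Blame l'); apply (step_frame_blame Sg (EWait Sg T1 e1 (EHole Sg) l)); discriminate.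
  -
    destruct (H0 eq_refl) as [[e' He]|[[v1 ->]|[l' ->]]].
    + left; apply (step_frame Sg (EActive Sg T1 e1 (EHole Sg) v l) _ _ He).
    + left. pose proof (canon_typing Sg Hneq Sig FH _ _ _ t0 eq_refl v1 eq_refl) as Hc.
      destruct v1; simpl in Hc.
      * destruct Hc as [Hu _]. inversion Hu.
        destruct FH as [_ [_ [_ [Hb _]]]]. destruct (Hb k (eq_sym H2)) as [->| ->].
        -- eapply red_step. apply (R_OK Sg).
        -- eapply red_step. apply (R_Fail Sg).
      * destruct Hc as [X [Y Hu]]; discriminate.
      * destruct Hc as [X Hu]; discriminate.
      * destruct Hc as [[X [Y Hu]] _]; discriminate.
    + left; exists (Blame l'); apply (step_frame_blame Sg (EActive Sg T1 e1 (EHole Sg) v l)); discriminate.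
  - right; right; eauto.
  - apply H; auto.
  - right; left; eexists; eauto.
  - right; left; eexists; eauto.
  - constructor.
  - constructor; [apply H | apply H0]; auto.
Qed.
End Prog.

Theorem mainTheorem7 (Sg : sig) (Sig : tysig Sg) :
  FH_assumptions Sg Sig ->
  forall (e : tm Sg) (T : ty Sg),
    typing Sg Sig nil e T ->
    (exists e', step Sg e e') \/ is_value Sg e \/ (exists l : label, e = Blame l).
Proof.
  intros FH e T H. exact (progress Sg Sig FH _ _ _ H eq_refl).
Qed.
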